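(* Let $\lambda>0$ and let $f$ be analytic in $\mathbb{D}=\{z:|z|<1\}$ with $f(0)=0$, $f'(0)=1$. If \[|z^2f''(z)+zf'(z)-f(z)|\le3\lambda\qquad(z\in\mathbb{D}),\] then $f\in\Omega_\lambda$. The number $3\lambda$ is best possible.
   Context: $\Omega_\lambda$ denotes the set of functions $f$ analytic in $\mathbb{D}$ with $f(0)=0$, $f'(0)=1$, such that $zf'(z)-f(z)=\lambda z^2\phi(z)$ for some analytic $\phi$ on $\mathbb{D}$ with $|\phi(z)|\le1$. *)

(* Defs.v *)
From Stdlib Require Import Reals.
From Coquelicot Require Import Coquelicot.
Open Scope R_scope.

Definition inD (z : C) : Prop := Cmod z < 1.

Definition analytic_on_D (f : C -> C) : Prop :=
  forall z : C, inD z -> ex_derive (K := C_AbsRing) (V := C_NormedModule) f z.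

Definition derivative_on_D (f f1 : C -> C) : Prop :=
  forall z : C, inD z -> is_derive (K := C_AbsRing) (V := C_NormedModule) f z (f1 z).

Definition Omega (lam : R) (f : C -> C) : Prop :=
  exists f1 : C -> C,
    derivative_on_D f f1 /\ f 0%C = 0%C /\ f1 0%C = 1%C /\
    exists phi : C -> C,
      analytic_on_D phi /\
      (forall z, inD z -> Cmod (phi z) <= 1) /\
      (forall z, inD z -> (z * f1 z - f z = RtoC lam * z ^ 2 * phi z)%C).

(* Main.v *)
Require Import Defs.
From Stdlib Require Import Reals Lra Lia FunctionalExtensionality.
From Coquelicot Require Import Coquelicot.
Open Scope R_scope.

Lemma Cmod_fst (x : C) : Rabs (fst x) <= Cmod x.
Proof. apply (re_le_Cmod x). Qed.
Lemma Cmod_snd (x : C) : Rabs (snd x) <= Cmod x.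
Proof.
  unfold Cmod. rewrite <- sqrt_Rsqr_abs. apply sqrt_le_1_alt.
  unfold Rsqr. destruct x as [a b]; simpl. nra.
Qed.
Lemma Cmod_le_sum (x : C) : Cmod x <= Rabs (fst x) + Rabs (snd x).
Proof.
  unfold Cmod. destruct x as [a b]; simpl.
  rewrite <- (sqrt_Rsqr (Rabs a + Rabs b)).
  2: { pose proof (Rabs_pos a); pose proof (Rabs_pos b); lra. }
  apply sqrt_le_1_alt. unfold Rsqr.
  pose proof (Rabs_pos a); pose proof (Rabs_pos b).
  assert (Ha: a*a = Rabs a * Rabs a) by apply Rsqr_abs. assert (Hb: b*b = Rabs b * Rabs b) by apply Rsqr_abs. nra.
Qed.
Lemma Cmod_minus_sym (x y : C) : Cmod (x - y) = Cmod (y - x).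
Proof. rewrite <- Cmod_opp. f_equal. ring. Qed.

Definition Dc (F : C -> C) (z l : C) : Prop :=
  forall eps, 0 < eps -> exists d, 0 < d /\
    forall y, Cmod (y - z) < d -> Cmod (F y - F z - l * (y - z)) <= eps * Cmod (y - z).

Lemma Dc_iff F z l : is_derive (K := C_AbsRing) (V := C_NormedModule) F z l <-> Dc F z l.
Proof.
  unfold is_derive, filterdiff. split.
  - intros [_ H] eps Heps.
    specialize (H z (fun P HP => HP) (mkposreal eps Heps)).
    destruct H as [d Hd]. exists d. split; [apply cond_pos|].
    intros y Hy. rewrite (Cmult_comm l). apply (Hd y). exact Hy.
  - intros H. split.
    + apply is_linear_scal_l.
    + intros x Hx. assert (Hzx : z = x) by (apply (is_filter_lim_locally_unique (K:=C_AbsRing) (V:=AbsRing_NormedModule C_AbsRing)); exact Hx). subst x.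
      intros [eps Heps]. destruct (H eps Heps) as [d [Hd Hd']].
      exists (mkposreal d Hd). intros y Hy. simpl. change (scal (minus y z) l) with ((y - z) * l)%C. rewrite (Cmult_comm _ l). apply Hd'. exact Hy.
Qed.

Lemma Cmod_sq (x : C) : Cmod x * Cmod x = fst x * fst x + snd x * snd x.
Proof.
  unfold Cmod. rewrite sqrt_sqrt; [ring|]. destruct x as [a b]; simpl. nra.
Qed.

Lemma Dreal_iff (f : R -> R) x l : is_derive f x l <->
  (forall eps, 0 < eps -> exists d, 0 < d /\
    forall y, Rabs (y - x) < d -> Rabs (f y - f x - (y - x) * l) <= eps * Rabs (y - x)).
Proof.
  unfold is_derive, filterdiff. split.
  - intros [_ H] eps Heps.
    specialize (H x (fun P HP => HP) (mkposreal eps Heps)).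
    destruct H as [d Hd]. exists d. split; [apply cond_pos|].
    intros y Hy. apply (Hd y). exact Hy.
  - intros H. split.
    + apply is_linear_scal_l.
    + intros x' Hx. assert (Hzx : x = x') by (apply (is_filter_lim_locally_unique (K:=R_AbsRing) (V:=AbsRing_NormedModule R_AbsRing)); exact Hx). subst x'.
      intros [eps Heps]. destruct (H eps Heps) as [d [Hd Hd']].
      exists (mkposreal d Hd). intros y Hy. apply Hd'. exact Hy.
Qed.

Definition Dr (p : R -> C) (t : R) (v : C) : Prop :=
  forall eps, 0 < eps -> exists d, 0 < d /\
    forall s, Rabs (s - t) < d -> Cmod (p s - p t - RtoC (s - t) * v) <= eps * Rabs (s - t).

Lemma Dr_fst p t v : Dr p t v -> is_derive (fun s => fst (p s)) t (fst v).
Proof.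
  intros H. apply Dreal_iff. intros eps Heps. destruct (H eps Heps) as [d [Hd H']].
  exists d; split; auto. intros y Hy. specialize (H' y Hy).
  eapply Rle_trans; [|exact H']. eapply Rle_trans; [|apply Cmod_fst].
  simpl. right. f_equal. ring.
Qed.
Lemma Dr_snd p t v : Dr p t v -> is_derive (fun s => snd (p s)) t (snd v).
Proof.
  intros H. apply Dreal_iff. intros eps Heps. destruct (H eps Heps) as [d [Hd H']].
  exists d; split; auto. intros y Hy. specialize (H' y Hy).
  eapply Rle_trans; [|exact H']. eapply Rle_trans; [|apply Cmod_snd].
  simpl. right. f_equal. ring.
Qed.
Lemma Dr_of_comp (p : R -> C) (t : R) (v : C) : is_derive (fun s => fst (p s)) t (fst v) ->
  is_derive (fun s => snd (p s)) t (snd v) -> Dr p t v.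
Proof.
  intros H1 H2. rewrite Dreal_iff in H1, H2. intros eps Heps.
  destruct (H1 (eps/2) ltac:(lra)) as [d1 [Hd1 H1']].
  destruct (H2 (eps/2) ltac:(lra)) as [d2 [Hd2 H2']].
  exists (Rmin d1 d2). split; [apply Rmin_pos; auto|]. intros s Hs.
  assert (A1 : Rabs (s - t) < d1) by (eapply Rlt_le_trans; [exact Hs| apply Rmin_l]).
  assert (A2 : Rabs (s - t) < d2) by (eapply Rlt_le_trans; [exact Hs| apply Rmin_r]).
  specialize (H1' s A1). specialize (H2' s A2).
  eapply Rle_trans; [apply Cmod_le_sum|]. simpl.
  match goal with |- Rabs ?a + Rabs ?b <= _ =>
    assert (Ea : a = fst (p s) - fst (p t) - (s - t) * fst v) by ring;
    assert (Eb : b = snd (p s) - snd (p t) - (s - t) * snd v) by ring;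
    rewrite Ea, Eb end. lra.
Qed.

Definition ccont (F : C -> C) (z : C) : Prop :=
  forall eps, 0 < eps -> exists d, 0 < d /\ forall y, Cmod (y - z) < d -> Cmod (F y - F z) < eps.
Definition pcont (p : R -> C) (t : R) : Prop :=
  forall eps, 0 < eps -> exists d, 0 < d /\ forall s, Rabs (s - t) < d -> Cmod (p s - p t) < eps.

Lemma Dc_cont F z l : Dc F z l -> ccont F z.
Proof.
  intros H eps Heps. destruct (H 1 ltac:(lra)) as [d [Hd H']].
  exists (Rmin d (eps / (2 + Cmod l))). pose proof (Cmod_ge_0 l).
  split. { apply Rmin_pos; auto. apply Rdiv_lt_0_compat; lra. }
  intros y Hy.
  assert (A1 : Cmod (y - z) < d) by (eapply Rlt_le_trans; [exact Hy| apply Rmin_l]).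
  assert (A2 : Cmod (y - z) < eps / (2 + Cmod l)) by (eapply Rlt_le_trans; [exact Hy| apply Rmin_r]).
  specialize (H' y A1).
  replace (F y - F z)%C with ((F y - F z - l * (y - z)) + l * (y - z))%C by ring.
  eapply Rle_lt_trans; [apply Cmod_triangle|]. rewrite Cmod_mult.
  pose proof (Cmod_ge_0 (y - z)%C).
  apply (Rmult_lt_compat_l (2 + Cmod l)) in A2; [|lra].
  field_simplify in A2; [|lra]. nra.
Qed.

Lemma Dr_cont p t v : Dr p t v -> pcont p t.
Proof.
  intros H eps Heps. destruct (H 1 ltac:(lra)) as [d [Hd H']].
  exists (Rmin d (eps / (2 + Cmod v))). pose proof (Cmod_ge_0 v).
  split. { apply Rmin_pos; auto. apply Rdiv_lt_0_compat; lra. }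
  intros y Hy.
  assert (A1 : Rabs (y - t) < d) by (eapply Rlt_le_trans; [exact Hy| apply Rmin_l]).
  assert (A2 : Rabs (y - t) < eps / (2 + Cmod v)) by (eapply Rlt_le_trans; [exact Hy| apply Rmin_r]).
  specialize (H' y A1).
  replace (p y - p t)%C with ((p y - p t - RtoC (y - t) * v) + RtoC (y - t) * v)%C by ring.
  eapply Rle_lt_trans; [apply Cmod_triangle|]. rewrite Cmod_mult, Cmod_R.
  pose proof (Rabs_pos (y - t)).
  apply (Rmult_lt_compat_l (2 + Cmod v)) in A2; [|lra].
  field_simplify in A2; [|lra]. nra.
Qed.

Lemma pcont_comp F p t : ccont F (p t) -> pcont p t -> pcont (fun s => F (p s)) t.
Proof.
  intros HF Hp eps Heps. destruct (HF eps Heps) as [d [Hd H']].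
  destruct (Hp d Hd) as [d2 [Hd2 H2]]. exists d2; split; auto.
Qed.

Lemma pcont_plus p q t : pcont p t -> pcont q t -> pcont (fun s => p s + q s)%C t.
Proof.
  intros Hp Hq eps Heps.
  destruct (Hp (eps/2) ltac:(lra)) as [d1 [Hd1 H1]].
  destruct (Hq (eps/2) ltac:(lra)) as [d2 [Hd2 H2]].
  exists (Rmin d1 d2). split; [apply Rmin_pos; auto|]. intros s Hs.
  assert (A1 : Rabs (s - t) < d1) by (eapply Rlt_le_trans; [exact Hs| apply Rmin_l]).
  assert (A2 : Rabs (s - t) < d2) by (eapply Rlt_le_trans; [exact Hs| apply Rmin_r]).
  specialize (H1 s A1). specialize (H2 s A2).
  replace (p s + q s - (p t + q t))%C with ((p s - p t) + (q s - q t))%C by ring.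
  eapply Rle_lt_trans; [apply Cmod_triangle|]. lra.
Qed.

Lemma pcont_const c t : pcont (fun _ => c) t.
Proof.
  intros eps Heps. exists 1. split; [lra|]. intros. replace (c - c)%C with (RtoC 0) by ring.
  rewrite Cmod_0. auto.
Qed.

Lemma pcont_mult p q t : pcont p t -> pcont q t -> pcont (fun s => p s * q s)%C t.
Proof.
  intros Hp Hq eps Heps.
  set (A := Cmod (p t)). set (B := Cmod (q t)).
  assert (HA : 0 <= A) by apply Cmod_ge_0. assert (HB : 0 <= B) by apply Cmod_ge_0.
  set (e := Rmin 1 (eps / (2 * (1 + A + B)))).
  assert (He : 0 < e) by (apply Rmin_pos; [lra| apply Rdiv_lt_0_compat; lra]).
  assert (He1 : e <= 1) by apply Rmin_l.
  assert (He2 : e * (1 + A + B) <= eps / 2).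
  { assert (e <= eps / (2 * (1 + A + B))) by apply Rmin_r.
    apply (Rmult_le_compat_r (1 + A + B)) in H; [|lra]. field_simplify in H; lra. }
  destruct (Hp e He) as [d1 [Hd1 H1]].
  destruct (Hq e He) as [d2 [Hd2 H2]].
  exists (Rmin d1 d2). split; [apply Rmin_pos; auto|]. intros s Hs.
  assert (A1 : Rabs (s - t) < d1) by (eapply Rlt_le_trans; [exact Hs| apply Rmin_l]).
  assert (A2 : Rabs (s - t) < d2) by (eapply Rlt_le_trans; [exact Hs| apply Rmin_r]).
  specialize (H1 s A1). specialize (H2 s A2).
  replace (p s * q s - p t * q t)%C with
    ((p s - p t) * (q s - q t) + (p s - p t) * q t + p t * (q s - q t))%C by ring.
  eapply Rle_lt_trans; [apply Cmod_triangle|].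
  eapply Rle_lt_trans; [apply Rplus_le_compat_r; apply Cmod_triangle|].
  rewrite !Cmod_mult. fold A B.
  pose proof (Cmod_ge_0 (p s - p t)%C). pose proof (Cmod_ge_0 (q s - q t)%C).
  assert (Cmod (p s - p t) * Cmod (q s - q t) <= e * e) by (apply Rmult_le_compat; lra).
  assert (Cmod (p s - p t) * B <= e * B) by (apply Rmult_le_compat_r; lra).
  assert (A * Cmod (q s - q t) <= A * e) by (apply Rmult_le_compat_l; lra).
  assert (e * e <= e * 1) by (apply Rmult_le_compat_l; lra).
  assert (e * B + A * e + e * e <= e * (1 + A + B)) by nra.
  lra.
Qed.

Lemma Dc_plus (F G : C -> C) z a b : Dc F z a -> Dc G z b -> Dc (fun y => F y + G y)%C z (a + b)%C.
Proof.
  intros H1 H2. apply Dc_iff. apply Dc_iff in H1. apply Dc_iff in H2.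
  apply (is_derive_plus (K:=C_AbsRing) (V:=C_NormedModule) F G z a b H1 H2).
Qed.
Lemma Dc_minus (F G : C -> C) z a b : Dc F z a -> Dc G z b -> Dc (fun y => F y - G y)%C z (a - b)%C.
Proof.
  intros H1 H2. apply Dc_iff. apply Dc_iff in H1. apply Dc_iff in H2.
  apply (is_derive_minus (K:=C_AbsRing) (V:=C_NormedModule) F G z a b H1 H2).
Qed.
Lemma Dc_iff' F z l : is_derive (K := C_AbsRing) (V := AbsRing_NormedModule C_AbsRing) F z l <-> Dc F z l.
Proof.
  unfold is_derive, filterdiff. split.
  - intros [_ H] eps Heps.
    specialize (H z (fun P HP => HP) (mkposreal eps Heps)).
    destruct H as [d Hd]. exists d. split; [apply cond_pos|].
    intros y Hy. rewrite (Cmult_comm l). apply (Hd y). exact Hy.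
  - intros H. split.
    + apply is_linear_scal_l.
    + intros x Hx. assert (Hzx : z = x) by (apply (is_filter_lim_locally_unique (K:=C_AbsRing) (V:=AbsRing_NormedModule C_AbsRing)); exact Hx). subst x.
      intros [eps Heps]. destruct (H eps Heps) as [d [Hd Hd']].
      exists (mkposreal d Hd). intros y Hy. simpl. change (scal (minus y z) l) with ((y - z) * l)%C. rewrite (Cmult_comm _ l). apply Hd'. exact Hy.
Qed.
Lemma Dc_mult (F G : C -> C) z a b : Dc F z a -> Dc G z b ->
  Dc (fun y => F y * G y)%C z (a * G z + F z * b)%C.
Proof.
  intros H1 H2. 
  apply Dc_iff' in H1. apply Dc_iff' in H2. apply Dc_iff'.
  exact (is_derive_mult (K:=C_AbsRing) F G z a b H1 H2 Cmult_comm).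
Qed.
Lemma Dc_comp (F G : C -> C) z a b : Dc G z b -> Dc F (G z) a -> Dc (fun y => F (G y)) z (b * a)%C.
Proof.
  intros H1 H2. apply Dc_iff. apply Dc_iff' in H1. apply Dc_iff in H2.
  apply (is_derive_comp (K:=C_AbsRing) (V:=C_NormedModule) F G z a b H2 H1).
Qed.
Lemma Dc_const (c z : C) : Dc (fun _ => c) z 0%C.
Proof. apply Dc_iff. apply (is_derive_const (K:=C_AbsRing) (V:=C_NormedModule)). Qed.
Lemma Dc_id (z : C) : Dc (fun y => y) z 1%C.
Proof. apply Dc_iff'. exact (is_derive_id (K:=C_AbsRing) z). Qed.
Lemma Dc_scal (F : C -> C) z a c : Dc F z a -> Dc (fun y => c * F y)%C z (c * a)%C.
Proof.
  intros H. pose proof (Dc_mult _ _ z _ _ (Dc_const c z) H). simpl in H0.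
  replace (c * a)%C with (0 * F z + c * a)%C by ring. exact H0.
Qed.
Lemma Dc_unique (F : C -> C) z a b : Dc F z a -> Dc F z b -> a = b.
Proof.
  intros H1 H2. apply Dc_iff in H1. apply Dc_iff in H2.
  apply is_C_derive_unique in H1. apply is_C_derive_unique in H2. congruence.
Qed.
Lemma Dc_ext_loc (F G : C -> C) z a d : 0 < d -> (forall y, Cmod (y - z) < d -> F y = G y) ->
  Dc F z a -> Dc G z a.
Proof.
  intros Hd Heq H eps Heps. destruct (H eps Heps) as [d1 [Hd1 H1]].
  exists (Rmin d d1). split; [apply Rmin_pos; auto|]. intros y Hy.
  assert (A1 : Cmod (y - z) < d) by (eapply Rlt_le_trans; [exact Hy| apply Rmin_l]).
  assert (A2 : Cmod (y - z) < d1) by (eapply Rlt_le_trans; [exact Hy| apply Rmin_r]).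
  rewrite <- (Heq y A1), <- (Heq z). apply H1; auto.
  replace (z - z)%C with (RtoC 0) by ring. rewrite Cmod_0. auto.
Qed.

Lemma Dc_inv (y0 : C) : y0 <> 0%C -> Dc (fun y => / y)%C y0 (- / (y0 * y0))%C.
Proof.
  intros H0 eps Heps. set (m := Cmod y0).
  assert (Hm : 0 < m) by (apply Cmod_gt_0; auto).
  exists (Rmin (m/2) (eps * (m * m * m) / 2)). split.
  { apply Rmin_pos; [lra|]. apply Rmult_lt_0_compat; [|lra]. apply Rmult_lt_0_compat; [lra|].
    apply Rmult_lt_0_compat; [|lra]. apply Rmult_lt_0_compat; lra. }
  intros y Hy.
  assert (A1 : Cmod (y - y0) < m/2) by (eapply Rlt_le_trans; [exact Hy| apply Rmin_l]).
  assert (A2 : Cmod (y - y0) < eps * (m*m*m)/2) by (eapply Rlt_le_trans; [exact Hy| apply Rmin_r]).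
  assert (Hy1 : m / 2 <= Cmod y).
  { pose proof (Cmod_triangle y (y0 - y)%C). replace (y + (y0 - y))%C with y0 in H by ring.
    rewrite Cmod_minus_sym in H. fold m in H. lra. }
  assert (Hy0 : y <> 0%C). { intro E. subst y. rewrite Cmod_0 in Hy1. lra. }
  replace (/ y - / y0 - - / (y0 * y0) * (y - y0))%C with ((y - y0) * (y - y0) / (y * (y0 * y0)))%C
    by (field; auto).
  rewrite Cmod_div by (apply Cmult_neq_0; auto; apply Cmult_neq_0; auto).
  rewrite !Cmod_mult. fold m. set (u := Cmod (y - y0)). pose proof (Cmod_ge_0 (y - y0)%C).
  fold u in H, A1, A2.
  apply Rle_trans with (u * u / (m/2 * (m * m))).
  { unfold Rdiv. apply Rmult_le_compat_l; [nra|]. apply Rinv_le_contravar.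
    - apply Rmult_lt_0_compat; [lra|]. apply Rmult_lt_0_compat; lra.
    - apply Rmult_le_compat_r; [nra|lra]. }
  assert (u * u / (m / 2 * (m * m)) = u * (2 * u / (m*m*m))) by (field; lra).
  rewrite H1, (Rmult_comm eps u). apply Rmult_le_compat_l; auto.
  apply Rmult_le_reg_r with (m*m*m). { apply Rmult_lt_0_compat; [|lra]. apply Rmult_lt_0_compat; lra. }
  replace (2 * u / (m * m * m) * (m * m * m)) with (2 * u) by (field; lra). lra.
Qed.

Lemma Dr_chain (F : C -> C) (p : R -> C) t l v : Dc F (p t) l -> Dr p t v ->
  Dr (fun s => F (p s)) t (l * v)%C.
Proof.
  intros HF Hp eps Heps. set (L := Cmod l). set (V := Cmod v).
  assert (HL : 0 <= L) by apply Cmod_ge_0. assert (HV : 0 <= V) by apply Cmod_ge_0.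
  set (e1 := eps / (2 * (V + 1))). assert (He1 : 0 < e1) by (apply Rdiv_lt_0_compat; lra).
  set (e2 := Rmin 1 (eps / (2 * (L + 1)))).
  assert (He2 : 0 < e2) by (apply Rmin_pos; [lra|]; apply Rdiv_lt_0_compat; lra).
  assert (He2a : e2 <= 1) by apply Rmin_l.
  assert (He2b : L * e2 <= eps / 2).
  { assert (e2 <= eps / (2 * (L + 1))) by apply Rmin_r.
    apply Rle_trans with (L * (eps / (2 * (L + 1)))). apply Rmult_le_compat_l; lra.
    apply Rmult_le_reg_r with (2 * (L+1)); [lra|]. field_simplify; [|lra]. nra. }
  destruct (HF e1 He1) as [dF [HdF HF']].
  destruct (Hp e2 He2) as [dp [Hdp Hp']].
  exists (Rmin dp (dF / (1 + V))). split.
  { apply Rmin_pos; auto. apply Rdiv_lt_0_compat; lra. }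
  intros s Hs.
  assert (A1 : Rabs (s - t) < dp) by (eapply Rlt_le_trans; [exact Hs| apply Rmin_l]).
  assert (A2 : Rabs (s - t) < dF / (1 + V)) by (eapply Rlt_le_trans; [exact Hs| apply Rmin_r]).
  specialize (Hp' s A1). pose proof (Rabs_pos (s - t)).
  assert (Hps : Cmod (p s - p t) <= (1 + V) * Rabs (s - t)).
  { replace (p s - p t)%C with ((p s - p t - RtoC (s - t) * v) + RtoC (s - t) * v)%C by ring.
    eapply Rle_trans; [apply Cmod_triangle|]. rewrite Cmod_mult, Cmod_R. fold V. nra. }
  assert (Hps2 : Cmod (p s - p t) < dF).
  { apply (Rmult_lt_compat_l (1 + V)) in A2; [|lra].
    replace ((1 + V) * (dF / (1 + V))) with dF in A2 by (field; lra). lra. }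
  specialize (HF' (p s) Hps2).
  replace (F (p s) - F (p t) - RtoC (s - t) * (l * v))%C with
    ((F (p s) - F (p t) - l * (p s - p t)) + l * (p s - p t - RtoC (s - t) * v))%C by ring.
  eapply Rle_trans; [apply Cmod_triangle|]. rewrite Cmod_mult. fold L.
  assert (e1 * Cmod (p s - p t) <= eps / 2 * Rabs (s - t)).
  { apply Rle_trans with (e1 * ((1 + V) * Rabs (s - t))). apply Rmult_le_compat_l; lra.
    unfold e1. right. field. lra. }
  assert (L * Cmod (p s - p t - RtoC (s - t) * v) <= L * (e2 * Rabs (s - t))) by (apply Rmult_le_compat_l; lra).
  assert (L * (e2 * Rabs (s - t)) <= eps / 2 * Rabs (s - t)) by (rewrite <- Rmult_assoc; apply Rmult_le_compat_r; lra).
  lra.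
Qed.

Definition cis (t : R) : C := (cos t, sin t).

Lemma Dr_cis t : Dr cis t (Ci * cis t)%C.
Proof.
  apply Dr_of_comp.
  - replace (fst (Ci * cis t)%C) with (- sin t) by (simpl; ring). apply is_derive_cos.
  - replace (snd (Ci * cis t)%C) with (cos t) by (simpl; ring). apply is_derive_sin.
Qed.

Lemma Cmod_cis t : Cmod (cis t) = 1.
Proof. unfold Cmod, cis; simpl. pose proof (sin2_cos2 t). unfold Rsqr in H.
  replace (cos t * (cos t * 1) + sin t * (sin t * 1)) with 1 by lra. apply sqrt_1. Qed.

Lemma cis_2PI : cis (2 * PI) = cis 0.
Proof. unfold cis. rewrite cos_2PI, sin_2PI, cos_0, sin_0. reflexivity. Qed.

Lemma Dr_affine (a b : C) t : Dr (fun s => a + RtoC s * b)%C t b.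
Proof.
  intros eps Heps. exists 1. split; [lra|]. intros s Hs.
  replace (a + RtoC s * b - (a + RtoC t * b) - RtoC (s - t) * b)%C with (RtoC 0).
  2:{ rewrite RtoC_minus. ring. }
  rewrite Cmod_0. apply Rmult_le_pos; [lra|apply Rabs_pos].
Qed.

Lemma Dr_ext (p q : R -> C) t v : (forall s, p s = q s) -> Dr p t v -> Dr q t v.
Proof.
  intros E H eps Heps. destruct (H eps Heps) as [d [Hd H']]. exists d; split; auto.
  intros s Hs. rewrite <- !E. auto.
Qed.

Lemma pcont_ext (p q : R -> C) t : (forall s, p s = q s) -> pcont p t -> pcont q t.
Proof.
  intros E H eps Heps. destruct (H eps Heps) as [d [Hd H']]. exists d; split; auto.
  intros s Hs. rewrite <- !E. auto.
Qed.

Lemma pcont_cis t : pcont cis t.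
Proof. eapply Dr_cont. apply Dr_cis. Qed.

Lemma pcont_RtoC t : pcont (fun s => RtoC s) t.
Proof.
  eapply pcont_ext; [|eapply Dr_cont; apply (Dr_affine 0 1 t)].
  intros s; simpl. ring.
Qed.

Lemma pcont_inv (p : R -> C) t : pcont p t -> p t <> 0%C -> pcont (fun s => / p s)%C t.
Proof.
  intros Hp H0. apply (pcont_comp (fun y => / y)%C p t); auto.
  eapply Dc_cont. apply Dc_inv. auto.
Qed.

Lemma pcont_pow (p : R -> C) t n : pcont p t -> pcont (fun s => p s ^ n)%C t.
Proof.
  intros Hp. induction n.
  - simpl. apply pcont_const.
  - simpl. apply pcont_mult; auto.
Qed.

Lemma Dc_ext_val (F : C -> C) z a b : a = b -> Dc F z a -> Dc F z b.
Proof. intros ->; auto. Qed.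

Definition isCI (f : R -> C) (a b : R) (l : C) : Prop :=
  is_RInt (fun t => fst (f t)) a b (fst l) /\ is_RInt (fun t => snd (f t)) a b (snd l).
Definition CI (f : R -> C) (a b : R) : C :=
  (RInt (fun t => fst (f t)) a b, RInt (fun t => snd (f t)) a b).

Lemma isCI_unique f a b l : isCI f a b l -> CI f a b = l.
Proof.
  intros [H1 H2]. unfold CI. apply (is_RInt_unique (V:=R_CompleteNormedModule)) in H1. apply (is_RInt_unique (V:=R_CompleteNormedModule)) in H2.
  rewrite H1, H2. destruct l; reflexivity.
Qed.

Lemma isCI_ext (f g : R -> C) a b l : (forall t, Rmin a b <= t <= Rmax a b -> f t = g t) ->
  isCI f a b l -> isCI g a b l.
Proof.
  intros E [H1 H2]. split.
  - apply (is_RInt_ext (fun t => fst (f t))); auto. intros x Hx; rewrite E; auto; lra.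
  - apply (is_RInt_ext (fun t => snd (f t))); auto. intros x Hx; rewrite E; auto; lra.
Qed.

Lemma isCI_plus (f g : R -> C) a b lf lg : isCI f a b lf -> isCI g a b lg ->
  isCI (fun t => f t + g t)%C a b (lf + lg)%C.
Proof.
  intros [H1 H2] [H3 H4]. split; simpl.
  - exact (is_RInt_plus _ _ a b _ _ H1 H3).
  - exact (is_RInt_plus _ _ a b _ _ H2 H4).
Qed.

Lemma isCI_opp (f : R -> C) a b lf : isCI f a b lf -> isCI (fun t => - f t)%C a b (- lf)%C.
Proof.
  intros [H1 H2]. split; simpl.
  - exact (is_RInt_opp _ a b _ H1).
  - exact (is_RInt_opp _ a b _ H2).
Qed.

Lemma isCI_minus (f g : R -> C) a b lf lg : isCI f a b lf -> isCI g a b lg ->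
  isCI (fun t => f t - g t)%C a b (lf - lg)%C.
Proof.
  intros H1 H2. apply isCI_plus; auto. apply isCI_opp; auto.
Qed.

Lemma isCI_cmul (c : C) (f : R -> C) a b lf : isCI f a b lf ->
  isCI (fun t => c * f t)%C a b (c * lf)%C.
Proof.
  intros [H1 H2]. split; simpl.
  - pose proof (is_RInt_scal _ a b (fst c) _ H1) as A.
    pose proof (is_RInt_scal _ a b (snd c) _ H2) as B.
    exact (is_RInt_minus _ _ a b _ _ A B).
  - pose proof (is_RInt_scal _ a b (fst c) _ H2) as A.
    pose proof (is_RInt_scal _ a b (snd c) _ H1) as B.
    exact (is_RInt_plus _ _ a b _ _ A B).
Qed.

Lemma isCI_const (c : C) a b : isCI (fun _ => c) a b (RtoC (b - a) * c)%C.
Proof.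
  split; simpl.
  - assert (HH := is_RInt_const (V:=R_NormedModule) a b (fst c)).
    change (scal (b-a) (fst c)) with ((b-a)*fst c) in HH.
    replace ((b - a) * fst c - 0 * snd c) with ((b-a) * fst c) by ring. exact HH.
  - assert (HH := is_RInt_const (V:=R_NormedModule) a b (snd c)).
    change (scal (b-a) (snd c)) with ((b-a)*snd c) in HH.
    replace ((b - a) * snd c + 0 * fst c) with ((b-a) * snd c) by ring. exact HH.
Qed.

Lemma pcont_continuous_fst (f : R -> C) t : pcont f t -> continuous (fun s => fst (f s)) t.
Proof.
  intros H. apply continuity_pt_filterlim.
  intros eps Heps. destruct (H eps Heps) as [d [Hd H']]. exists d. split; auto.
  intros x [_ Hx]. simpl in Hx. unfold R_dist in Hx. simpl. unfold R_dist.
  eapply Rle_lt_trans; [|apply (H' x Hx)].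
  pose proof (Cmod_fst (f x - f t)%C). simpl in H0. exact H0.
Qed.
Lemma pcont_continuous_snd (f : R -> C) t : pcont f t -> continuous (fun s => snd (f s)) t.
Proof.
  intros H. apply continuity_pt_filterlim.
  intros eps Heps. destruct (H eps Heps) as [d [Hd H']]. exists d. split; auto.
  intros x [_ Hx]. simpl in Hx. unfold R_dist in Hx. simpl. unfold R_dist.
  eapply Rle_lt_trans; [|apply (H' x Hx)].
  pose proof (Cmod_snd (f x - f t)%C). simpl in H0. exact H0.
Qed.

Lemma isCI_exists (f : R -> C) a b : (forall t, Rmin a b <= t <= Rmax a b -> pcont f t) ->
  isCI f a b (CI f a b).
Proof.
  intros H. split; simpl; apply (RInt_correct (V:=R_CompleteNormedModule));
  apply ex_RInt_continuous; intros; [apply pcont_continuous_fst|apply pcont_continuous_snd]; auto.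
Qed.

Lemma isCI_bound (f : R -> C) (g : R -> R) a b l lg : a <= b -> isCI f a b l -> is_RInt g a b lg ->
  (forall t, a <= t <= b -> Cmod (f t) <= g t) -> Cmod l <= lg.
Proof.
  intros Hab [H1 H2] Hg Hb.
  destruct (Ceq_dec l 0%C) as [E|E].
  - subst l. rewrite Cmod_0.
    apply (is_RInt_le (fun _ => 0) g a b 0 lg Hab); auto.
    + assert (HH := is_RInt_const (V:=R_NormedModule) a b 0).
      change (scal (b-a) 0) with ((b-a)*0) in HH.
      replace ((b-a)*0) with 0 in HH by ring. exact HH.
    + intros x Hx. eapply Rle_trans; [apply Cmod_ge_0|apply Hb; lra].
  - assert (Hm : 0 < Cmod l) by (apply Cmod_gt_0; auto).
    set (u1 := fst l / Cmod l). set (u2 := snd l / Cmod l).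
    pose proof (is_RInt_scal _ a b u1 _ H1) as A.
    pose proof (is_RInt_scal _ a b u2 _ H2) as B.
    pose proof (is_RInt_plus _ _ a b _ _ A B) as AB.
    assert (Hv : u1 * fst l + u2 * snd l = Cmod l).
    { unfold u1, u2.
      assert (Cmod l * Cmod l = fst l * fst l + snd l * snd l) by apply Cmod_sq.
      replace (fst l / Cmod l * fst l + snd l / Cmod l * snd l) with ((fst l * fst l + snd l * snd l) / Cmod l) by (field; lra). rewrite <- H. field. lra. }
    change (is_RInt (fun y => u1 * fst (f y) + u2 * snd (f y)) a b (u1 * fst l + u2 * snd l)) in AB.
    rewrite Hv in AB.
    apply (is_RInt_le _ g a b _ lg Hab AB Hg).
    intros x Hx. change (u1 * fst (f x) + u2 * snd (f x) <= g x).
    eapply Rle_trans; [|apply Hb; lra].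
    (* Cauchy-Schwarz *)
    assert (Hcs : Rsqr (u1 * fst (f x) + u2 * snd (f x)) <= Rsqr (Cmod (f x))).
    { unfold Rsqr. rewrite Cmod_sq.
      assert (u1 * u1 + u2 * u2 = 1).
      { unfold u1, u2. pose proof (Cmod_sq l).
        replace (fst l / Cmod l * (fst l / Cmod l) + snd l / Cmod l * (snd l / Cmod l))
          with ((fst l * fst l + snd l * snd l) / (Cmod l * Cmod l)) by (field; lra).
        rewrite <- H. field. lra. }
      set (X1 := fst (f x)). set (X2 := snd (f x)).
      assert (eq: (X1*X1+X2*X2)*(u1*u1+u2*u2) - (u1*X1+u2*X2)*(u1*X1+u2*X2) = (u1*X2-u2*X1)*(u1*X2-u2*X1)) by ring.
      rewrite H in eq. pose proof (Rle_0_sqr (u1*X2-u2*X1)). unfold Rsqr in H0. lra. }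
    apply Rsqr_le_abs_0 in Hcs. rewrite (Rabs_pos_eq (Cmod (f x))) in Hcs by apply Cmod_ge_0.
    eapply Rle_trans; [apply Rle_abs|exact Hcs].
Qed.

Lemma isCI_FTC (P p : R -> C) a b : a <= b -> (forall t, a <= t <= b -> Dr P t (p t)) ->
  (forall t, a <= t <= b -> pcont p t) -> isCI p a b (P b - P a)%C.
Proof.
  intros Hab HD Hc.
  split.
  - replace (fst (P b - P a)%C) with (minus (fst (P b)) (fst (P a))) by (simpl; reflexivity).
    apply (is_RInt_derive (V:=R_CompleteNormedModule) (fun s => fst (P s)) (fun s => fst (p s))).
    + intros x Hx. rewrite Rmin_left, Rmax_right in Hx by auto. apply Dr_fst. auto.
    + intros x Hx. rewrite Rmin_left, Rmax_right in Hx by auto. apply pcont_continuous_fst. auto.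
  - replace (snd (P b - P a)%C) with (minus (snd (P b)) (snd (P a))) by (simpl; reflexivity).
    apply (is_RInt_derive (V:=R_CompleteNormedModule) (fun s => snd (P s)) (fun s => snd (p s))).
    + intros x Hx. rewrite Rmin_left, Rmax_right in Hx by auto. apply Dr_snd. auto.
    + intros x Hx. rewrite Rmin_left, Rmax_right in Hx by auto. apply pcont_continuous_snd. auto.
Qed.

Lemma Dr_zero_const (P : R -> C) a b : a < b -> (forall t, a <= t <= b -> Dr P t 0%C) -> P a = P b.
Proof.
  intros Hab H.
  assert (E1 : fst (P a) = fst (P b)).
  { apply (eq_is_derive (V:=R_NormedModule) (fun s => fst (P s))); auto.
    intros t Ht. apply (Dr_fst P t 0%C). auto. }
  assert (E2 : snd (P a) = snd (P b)).
  { apply (eq_is_derive (V:=R_NormedModule) (fun s => snd (P s))); auto.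
    intros t Ht. apply (Dr_snd P t 0%C). auto. }
  destruct (P a), (P b); simpl in *; congruence.
Qed.

Lemma Cmod_diff (a b : C) : Rabs (Cmod a - Cmod b) <= Cmod (a - b).
Proof.
  apply Rabs_le. split.
  - pose proof (Cmod_triangle (b - a)%C a). replace (b - a + a)%C with b in H by ring.
    rewrite Cmod_minus_sym in H. lra.
  - pose proof (Cmod_triangle (a - b)%C b). replace (a - b + b)%C with a in H by ring. lra.
Qed.

Lemma pcont_bounded (phi : R -> C) a b : a <= b -> (forall t, a <= t <= b -> pcont phi t) ->
  exists M, 0 <= M /\ forall t, a <= t <= b -> Cmod (phi t) <= M.
Proof.
  intros Hab H.
  destruct (continuity_ab_maj (fun t => Cmod (phi t)) a b Hab) as [Mx [HM _]].
  - intros c Hc. unfold continuity_pt, continue_in, limit1_in, limit_in.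
    intros eps Heps. destruct (H c Hc eps Heps) as [d [Hd H']]. exists d. split; auto.
    intros x [_ Hx]. simpl in *. unfold R_dist in *.
    eapply Rle_lt_trans; [apply Cmod_diff| apply H'; auto].
  - exists (Cmod (phi Mx)). split; [apply Cmod_ge_0|]. auto.
Qed.

Lemma is_RInt_constR (K a b : R) : is_RInt (fun _ => K) a b ((b - a) * K).
Proof.
  assert (HH := is_RInt_const (V:=R_NormedModule) a b K). exact HH.
Qed.

Lemma isCI_bound_const (f : R -> C) a b l K : a <= b -> isCI f a b l ->
  (forall t, a <= t <= b -> Cmod (f t) <= K) -> Cmod l <= (b - a) * K.
Proof.
  intros Hab H Hb. eapply isCI_bound; [exact Hab| exact H| apply is_RInt_constR| exact Hb].
Qed.

Definition wc (r t : R) : C := (RtoC r * cis t)%C.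

Lemma Cmod_wc r t : 0 <= r -> Cmod (wc r t) = r.
Proof. intros. unfold wc. rewrite Cmod_mult, Cmod_R, Cmod_cis, Rabs_pos_eq; lra. Qed.

Lemma wc_2PI r : wc r (2 * PI) = wc r 0.
Proof. unfold wc. rewrite cis_2PI. reflexivity. Qed.

Lemma Dr_wc r t : Dr (wc r) t (Ci * wc r t)%C.
Proof.
  unfold wc. replace (Ci * (RtoC r * cis t))%C with (RtoC r * (Ci * cis t))%C by ring.
  apply (Dr_chain (fun y => RtoC r * y)%C cis t). 2: apply Dr_cis.
  pose proof (Dc_scal (fun y => y) (cis t) 1 (RtoC r) (Dc_id _)) as HH.
  rewrite Cmult_1_r in HH. exact HH.
Qed.

Lemma pcont_wc r t : pcont (wc r) t.
Proof. eapply Dr_cont. apply Dr_wc. Qed.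

Lemma wc_minus_lb r t y : 0 <= r -> r - Cmod y <= Cmod (wc r t - y).
Proof.
  intros Hr. pose proof (Cmod_triangle (wc r t - y)%C y).
  replace (wc r t - y + y)%C with (wc r t) in H by ring. rewrite Cmod_wc in H; lra.
Qed.

Lemma wc_minus_nz r t y : Cmod y < r -> (wc r t - y)%C <> 0%C.
Proof.
  intros H E. pose proof (wc_minus_lb r t y). rewrite E, Cmod_0 in H0.
  pose proof (Cmod_ge_0 y). lra.
Qed.

Lemma wc_nz r t : 0 < r -> wc r t <> 0%C.
Proof.
  intros H E. pose proof (Cmod_wc r t). rewrite E, Cmod_0 in H0. lra.
Qed.

Definition kern (r : R) (phi : R -> C) (m : nat) (z : C) (t : R) : C :=
  (phi t * (/ (wc r t - z)) ^ m)%C.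
Definition CT (r : R) (phi : R -> C) (m : nat) (z : C) : C :=
  CI (kern r phi m z) 0 (2 * PI).

Lemma pcont_kern r phi m z t : (forall s, pcont phi s) -> Cmod z < r -> pcont (kern r phi m z) t.
Proof.
  intros Hp Hz. unfold kern. apply pcont_mult; auto. apply pcont_pow.
  apply pcont_inv. 2: apply wc_minus_nz; auto.
  apply (pcont_plus (wc r) (fun _ => - z)%C). apply pcont_wc. apply pcont_const.
Qed.

Lemma isCT r phi m z : (forall s, pcont phi s) -> Cmod z < r -> isCI (kern r phi m z) 0 (2 * PI) (CT r phi m z).
Proof.
  intros. apply isCI_exists. intros. apply pcont_kern; auto.
Qed.

Lemma pow_diff_bound (u u' delta : C) (B : R) (m : nat) : 0 <= B -> Cmod u <= B -> Cmod u' <= B ->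
  (u' - u = delta * u * u')%C ->
  Cmod (u' ^ m - u ^ m - delta * RtoC (INR m) * u ^ (S m))%C <= INR m * INR m * B ^ (m + 2) * (Cmod delta * Cmod delta).
Proof.
  intros HB Hu Hu' Hd. induction m.
  - simpl. replace (1 - 1 - delta * 0 * (u * 1))%C with (RtoC 0) by ring. rewrite Cmod_0. lra.
  - set (E := (u' ^ m - u ^ m - delta * RtoC (INR m) * u ^ S m)%C) in *.
    replace (u' ^ S m - u ^ S m - delta * RtoC (INR (S m)) * u ^ S (S m))%C with
      (u' * E + delta * delta * RtoC (INR (S m)) * u ^ (S (S m)) * u')%C.
    2:{ unfold E. rewrite S_INR, RtoC_plus.
        assert (HX : (u' - u - delta * u * u')%C = 0%C) by (rewrite Hd; ring).
        match goal with |- ?L = ?R => transitivity (R - (u' - u - delta*u*u') * (u^m + delta*(RtoC (INR m)+1)*u^(S m)))%C end.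
        - simpl. ring.
        - rewrite HX. ring. }
    eapply Rle_trans; [apply Cmod_triangle|]. rewrite !Cmod_mult, Cmod_R, Rabs_pos_eq by apply pos_INR.
    rewrite !Cmod_pow.
    pose proof (Cmod_ge_0 E). pose proof (Cmod_ge_0 delta). pose proof (Cmod_ge_0 u). pose proof (Cmod_ge_0 u').
    assert (Hum : Cmod u ^ (S (S m)) <= B ^ (S (S m))) by (apply pow_incr; lra).
    assert (HE : Cmod u' * Cmod E <= B * (INR m * INR m * B ^ (m + 2) * (Cmod delta * Cmod delta))).
    { apply Rmult_le_compat; auto. }
    assert (HP : Cmod delta * Cmod delta * INR (S m) * Cmod u ^ S (S m) * Cmod u' <=
                 Cmod delta * Cmod delta * INR (S m) * B ^ S (S m) * B).
    { apply Rmult_le_compat; auto.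
      - apply Rmult_le_pos; [|apply pow_le; auto]. apply Rmult_le_pos; [nra|apply pos_INR].
      - apply Rmult_le_compat_l; auto. apply Rmult_le_pos; [nra|apply pos_INR]. }
    replace (m + 2)%nat with (S (S m)) in * by lia. replace (S m + 2)%nat with (S (S (S m))) by lia.
    rewrite S_INR in *. simpl in *.
    pose proof (pos_INR m). set (D := Cmod delta * Cmod delta) in *. assert (0 <= D) by (unfold D; nra).
    set (BB := B * (B * B ^ m)) in *. assert (0 <= BB) by (unfold BB; apply Rmult_le_pos; auto; apply Rmult_le_pos; auto; apply pow_le; auto).
    assert (INR m * INR m + INR m + 1 <= (INR m + 1) * (INR m + 1)) by nra.
    assert (Hfin : B * (INR m * INR m * BB * D) + D * (INR m + 1) * BB * B <= (INR m + 1) * (INR m + 1) * (B * BB) * D).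
    { assert (0 <= B * BB * D) by (apply Rmult_le_pos; auto; apply Rmult_le_pos; auto).
      nra. }
    lra.
Qed.

Lemma Cmod_inv_le (a : C) d : 0 < d -> d <= Cmod a -> Cmod (/ a) <= / d.
Proof.
  intros Hd Ha. assert (a <> 0%C). { intro E; subst; rewrite Cmod_0 in Ha; lra. }
  rewrite Cmod_inv by auto. apply Rinv_le_contravar; auto.
Qed.

Lemma CT_deriv r phi m z : (forall s, pcont phi s) -> Cmod z < r ->
  Dc (CT r phi m) z (RtoC (INR m) * CT r phi (S m) z)%C.
Proof.
  intros Hp Hz. pose proof (Cmod_ge_0 z) as Hz0.
  destruct (pcont_bounded phi 0 (2 * PI)) as [M [HM HMb]].
  { pose proof PI_RGT_0; lra. } { intros; auto. }
  set (d0 := (r - Cmod z) / 2). assert (Hd0 : 0 < d0) by (unfold d0; lra).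
  set (B := / d0). assert (HB : 0 < B) by (apply Rinv_0_lt_compat; auto).
  intros eps Heps.
  set (K := 2 * PI * (M * (INR m * INR m * B ^ (m + 2)))).
  assert (HK : 0 <= K).
  { unfold K. pose proof PI_RGT_0. apply Rmult_le_pos; [lra|]. apply Rmult_le_pos; auto.
    apply Rmult_le_pos; [pose proof (pos_INR m); nra| apply pow_le; lra]. }
  exists (Rmin d0 (eps / (K + 1))). split.
  { apply Rmin_pos; auto. apply Rdiv_lt_0_compat; lra. }
  intros y Hy.
  assert (A1 : Cmod (y - z) < d0) by (eapply Rlt_le_trans; [exact Hy| apply Rmin_l]).
  assert (A2 : Cmod (y - z) < eps / (K + 1)) by (eapply Rlt_le_trans; [exact Hy| apply Rmin_r]).
  assert (Hy0 : Cmod y <= Cmod z + Cmod (y - z)).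
  { pose proof (Cmod_triangle z (y - z)%C). replace (z + (y - z))%C with y in H by ring. lra. }
  assert (Hyr : Cmod y < r) by (unfold d0 in A1; lra).
  pose proof (isCT r phi m y Hp Hyr) as H1.
  pose proof (isCT r phi m z Hp Hz) as H2.
  pose proof (isCT r phi (S m) z Hp Hz) as H3.
  pose proof (isCI_minus _ _ _ _ _ _ (isCI_minus _ _ _ _ _ _ H1 H2)
                (isCI_cmul (RtoC (INR m) * (y - z))%C _ _ _ _ H3)) as H4.
  set (delta := (y - z)%C) in *.
  replace (CT r phi m y - CT r phi m z - RtoC (INR m) * CT r phi (S m) z * delta)%C with
    (CT r phi m y - CT r phi m z - RtoC (INR m) * delta * CT r phi (S m) z)%C by ring.
  assert (Hpi : 0 < 2 * PI) by (pose proof PI_RGT_0; lra).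
  pose proof (isCI_bound_const _ 0 (2 * PI) _ (M * (INR m * INR m * B ^ (m + 2) * (Cmod delta * Cmod delta))) ltac:(lra) H4) as HB4.
  eapply Rle_trans; [apply HB4|].
  - intros t Ht.
    set (u := (/ (wc r t - z))%C). set (u' := (/ (wc r t - y))%C).
    assert (Hnz : (wc r t - z)%C <> 0%C) by (apply wc_minus_nz; auto).
    assert (Hny : (wc r t - y)%C <> 0%C) by (apply wc_minus_nz; auto).
    replace (kern r phi m y t - kern r phi m z t - RtoC (INR m) * delta * kern r phi (S m) z t)%C
      with (phi t * (u' ^ m - u ^ m - delta * RtoC (INR m) * u ^ S m))%C
      by (unfold kern; fold u u'; ring).
    rewrite Cmod_mult. apply Rmult_le_compat; auto; try apply Cmod_ge_0.
    apply pow_diff_bound; [lra| | |].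
    + unfold u. apply Cmod_inv_le; auto. pose proof (wc_minus_lb r t z). unfold d0 in *; lra.
    + unfold u'. apply Cmod_inv_le; auto. pose proof (wc_minus_lb r t y). unfold d0 in *; lra.
    + unfold u, u', delta. field. auto.
  - replace ((2 * PI - 0) * (M * (INR m * INR m * B ^ (m + 2) * (Cmod delta * Cmod delta))))
      with (K * Cmod delta * Cmod delta) by (unfold K; ring).
    pose proof (Cmod_ge_0 delta).
    assert (K * Cmod delta <= eps).
    { apply Rle_trans with (K * (eps / (K + 1))). apply Rmult_le_compat_l; lra.
      apply Rmult_le_reg_r with (K + 1); [lra|]. field_simplify; [|lra]. nra. }
    nra.
Qed.

Lemma Dr_ext_val (q : R -> C) u v v' : v = v' -> Dr q u v -> Dr q u v'.
Proof. intros ->; auto. Qed.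

Lemma Dr_mult_const (q : R -> C) u v c : Dr q u v -> Dr (fun a => q a * c)%C u (v * c)%C.
Proof.
  intros H. replace (v * c)%C with (c * v)%C by ring.
  apply (Dr_chain (fun a => a * c)%C q u c v); auto.
  pose proof (Dc_scal (fun y => y) (q u) 1 c (Dc_id _)) as HH.
  rewrite Cmult_1_r in HH. eapply Dc_ext_loc; [exact Rlt_0_1| |exact HH]. intros; simpl; ring.
Qed.

Lemma Dr_shift (q : R -> C) u v c : Dr q u v -> Dr (fun a => q a + c)%C u v.
Proof.
  intros H eps Heps. destruct (H eps Heps) as [d [Hd H']]. exists d; split; auto.
  intros s Hs. replace (q s + c - (q u + c) - RtoC (s - u) * v)%C with (q s - q u - RtoC (s - u) * v)%C by ring.
  auto.
Qed.

Lemma Dr_cmul (q : R -> C) u v c : Dr q u v -> Dr (fun a => c * q a)%C u (c * v)%C.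
Proof.
  intros H. apply (Dr_ext_val _ _ (v * c)%C); [ring|].
  eapply Dr_ext; [|apply (Dr_mult_const q u v c H)]. intros; simpl; ring.
Qed.


Lemma Ci_sq : (Ci * Ci)%C = (- RtoC 1)%C.
Proof. apply injective_projections; simpl; ring. Qed.

Lemma CT2_wc_zero r y : Cmod y < r -> CT r (wc r) 2 y = 0%C.
Proof.
  intros Hy. pose proof (Cmod_ge_0 y).
  set (P := fun t => (/ (wc r t - y))%C).
  assert (HD : forall t, Dr P t (- Ci * kern r (wc r) 2 y t)%C).
  { intros t. unfold P.
    assert (Hn : (wc r t - y)%C <> 0%C) by (apply wc_minus_nz; auto).
    apply (Dr_ext_val _ _ ((- / ((wc r t - y) * (wc r t - y))) * (Ci * wc r t))%C).
    { unfold kern. simpl. field. auto. }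
    apply (Dr_chain (fun a => / a)%C (fun s => wc r s - y)%C t).
    - apply Dc_inv. auto.
    - apply (Dr_shift (wc r) t _ (- y)%C). apply Dr_wc. }
  assert (HF := isCI_FTC P (fun t => - Ci * kern r (wc r) 2 y t)%C 0 (2 * PI)
          ltac:(pose proof PI_RGT_0; lra) (fun t _ => HD t)
          (fun t _ => pcont_mult _ _ t (pcont_const _ t) (pcont_kern r (wc r) 2 y t (pcont_wc r) Hy))).
  unfold P in HF. rewrite wc_2PI in HF. replace (/ (wc r 0 - y) - / (wc r 0 - y))%C with (RtoC 0) in HF by ring.
  pose proof (isCI_cmul Ci _ _ _ _ HF) as HF2. rewrite Cmult_0_r in HF2.
  apply isCI_unique. eapply isCI_ext; [|exact HF2].
  intros t _. transitivity ((- (Ci * Ci)) * kern r (wc r) 2 y t)%C; [ring|].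
  rewrite Ci_sq. ring.
Qed.

Lemma CT1_wc r z : Cmod z < r -> CT r (wc r) 1 z = RtoC (2 * PI).
Proof.
  intros Hz. pose proof (Cmod_ge_0 z) as Hz0.
  set (J := fun s : R => CT r (wc r) 1 (RtoC s * z)%C).
  assert (Hin : forall s, 0 <= s <= 1 -> Cmod (RtoC s * z)%C < r).
  { intros s Hs. rewrite Cmod_mult, Cmod_R, Rabs_pos_eq by lra. nra. }
  assert (E : J 0 = J 1).
  { apply Dr_zero_const; [lra|]. intros s Hs. unfold J.
    apply (Dr_ext_val _ _ (RtoC (INR 1) * CT r (wc r) 2 (RtoC s * z) * z)%C).
    { rewrite CT2_wc_zero by auto. ring. }
    apply (Dr_chain (CT r (wc r) 1) (fun s => RtoC s * z)%C s).
    - apply CT_deriv; auto. intros; apply pcont_wc.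
    - eapply Dr_ext; [|apply (Dr_affine 0 z s)]. intros; simpl; ring. }
  unfold J in E. cbv beta in E. replace (RtoC 1 * z)%C with z in E by ring. rewrite <- E.
  replace (RtoC 0 * z)%C with (RtoC 0) by ring.
  apply isCI_unique. assert (Hr : 0 < r) by lra.
  assert (HC := isCI_const (RtoC 1) 0 (2*PI)).
  replace (RtoC (2 * PI - 0) * RtoC 1)%C with (RtoC (2*PI)) in HC by (rewrite <- RtoC_mult; f_equal; ring).
  eapply isCI_ext; [|exact HC]. intros t _. unfold kern. simpl.
  replace (RtoC 0 * z)%C with (RtoC 0) by ring.
  field. replace (wc r t - 0)%C with (wc r t) by ring. apply wc_nz; auto.
Qed.

Definition c2 (h : R -> R -> C) (u v : R) : Prop :=
  forall eps, 0 < eps -> exists d, 0 < d /\ forall u' v', Rabs (u' - u) < d -> Rabs (v' - v) < d ->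
    Cmod (h u' v' - h u v) < eps.

Lemma c2_comp (G : C -> C) h u v : ccont G (h u v) -> c2 h u v -> c2 (fun a b => G (h a b)) u v.
Proof.
  intros HG Hh eps Heps. destruct (HG eps Heps) as [d [Hd H']].
  destruct (Hh d Hd) as [d2 [Hd2 H2]]. exists d2; split; auto.
Qed.

Lemma c2_plus p q u v : c2 p u v -> c2 q u v -> c2 (fun a b => p a b + q a b)%C u v.
Proof.
  intros Hp Hq eps Heps.
  destruct (Hp (eps/2) ltac:(lra)) as [d1 [Hd1 H1]].
  destruct (Hq (eps/2) ltac:(lra)) as [d2 [Hd2 H2]].
  exists (Rmin d1 d2). split; [apply Rmin_pos; auto|]. intros s s' Hs Hs'.
  assert (A1 : Rabs (s - u) < d1) by (eapply Rlt_le_trans; [exact Hs| apply Rmin_l]).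
  assert (A2 : Rabs (s - u) < d2) by (eapply Rlt_le_trans; [exact Hs| apply Rmin_r]).
  assert (B1 : Rabs (s' - v) < d1) by (eapply Rlt_le_trans; [exact Hs'| apply Rmin_l]).
  assert (B2 : Rabs (s' - v) < d2) by (eapply Rlt_le_trans; [exact Hs'| apply Rmin_r]).
  specialize (H1 s s' A1 B1). specialize (H2 s s' A2 B2).
  replace (p s s' + q s s' - (p u v + q u v))%C with ((p s s' - p u v) + (q s s' - q u v))%C by ring.
  eapply Rle_lt_trans; [apply Cmod_triangle|]. lra.
Qed.

Lemma c2_mult p q u v : c2 p u v -> c2 q u v -> c2 (fun a b => p a b * q a b)%C u v.
Proof.
  intros Hp Hq eps Heps.
  set (A := Cmod (p u v)). set (B := Cmod (q u v)).
  assert (HA : 0 <= A) by apply Cmod_ge_0. assert (HB : 0 <= B) by apply Cmod_ge_0.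
  set (e := Rmin 1 (eps / (2 * (1 + A + B)))).
  assert (He : 0 < e) by (apply Rmin_pos; [lra| apply Rdiv_lt_0_compat; lra]).
  assert (He1 : e <= 1) by apply Rmin_l.
  assert (He2 : e * (1 + A + B) <= eps / 2).
  { assert (e <= eps / (2 * (1 + A + B))) by apply Rmin_r.
    apply (Rmult_le_compat_r (1 + A + B)) in H; [|lra]. field_simplify in H; lra. }
  destruct (Hp e He) as [d1 [Hd1 H1]].
  destruct (Hq e He) as [d2 [Hd2 H2]].
  exists (Rmin d1 d2). split; [apply Rmin_pos; auto|]. intros s s' Hs Hs'.
  assert (A1 : Rabs (s - u) < d1) by (eapply Rlt_le_trans; [exact Hs| apply Rmin_l]).
  assert (A2 : Rabs (s - u) < d2) by (eapply Rlt_le_trans; [exact Hs| apply Rmin_r]).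
  assert (B1 : Rabs (s' - v) < d1) by (eapply Rlt_le_trans; [exact Hs'| apply Rmin_l]).
  assert (B2 : Rabs (s' - v) < d2) by (eapply Rlt_le_trans; [exact Hs'| apply Rmin_r]).
  specialize (H1 s s' A1 B1). specialize (H2 s s' A2 B2).
  replace (p s s' * q s s' - p u v * q u v)%C with
    ((p s s' - p u v) * (q s s' - q u v) + (p s s' - p u v) * q u v + p u v * (q s s' - q u v))%C by ring.
  eapply Rle_lt_trans; [apply Cmod_triangle|].
  eapply Rle_lt_trans; [apply Rplus_le_compat_r; apply Cmod_triangle|].
  rewrite !Cmod_mult. fold A B.
  pose proof (Cmod_ge_0 (p s s' - p u v)%C). pose proof (Cmod_ge_0 (q s s' - q u v)%C).
  assert (Cmod (p s s' - p u v) * Cmod (q s s' - q u v) <= e * e) by (apply Rmult_le_compat; lra).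
  assert (Cmod (p s s' - p u v) * B <= e * B) by (apply Rmult_le_compat_r; lra).
  assert (A * Cmod (q s s' - q u v) <= A * e) by (apply Rmult_le_compat_l; lra).
  assert (e * e <= e * 1) by (apply Rmult_le_compat_l; lra).
  assert (e * B + A * e + e * e <= e * (1 + A + B)) by nra.
  lra.
Qed.

Lemma c2_fstv (p : R -> C) u v : pcont p u -> c2 (fun a b => p a) u v.
Proof.
  intros H eps Heps. destruct (H eps Heps) as [d [Hd H']]. exists d; split; auto.
Qed.
Lemma c2_sndv (p : R -> C) u v : pcont p v -> c2 (fun a b => p b) u v.
Proof.
  intros H eps Heps. destruct (H eps Heps) as [d [Hd H']]. exists d; split; auto.
Qed.

Definition Lf (al be : R) (c : C) : R := al * fst c + be * snd c.

Lemma Lf_bound al be (c : C) : Rabs (Lf al be c) <= (Rabs al + Rabs be) * Cmod c.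
Proof.
  unfold Lf. eapply Rle_trans; [apply Rabs_triang|]. rewrite !Rabs_mult.
  pose proof (Cmod_fst c). pose proof (Cmod_snd c). pose proof (Rabs_pos al). pose proof (Rabs_pos be).
  assert (Rabs al * Rabs (fst c) <= Rabs al * Cmod c) by (apply Rmult_le_compat_l; auto).
  assert (Rabs be * Rabs (snd c) <= Rabs be * Cmod c) by (apply Rmult_le_compat_l; auto).
  lra.
Qed.

Lemma Lf_minus al be (a b : C) : Lf al be a - Lf al be b = Lf al be (a - b)%C.
Proof. unfold Lf; simpl; ring. Qed.

Lemma c2_cont2d al be h u v : c2 h u v -> continuity_2d_pt (fun a b => Lf al be (h a b)) u v.
Proof.
  intros H [eps Heps]. set (K := Rabs al + Rabs be + 1).
  assert (HK : 0 < K) by (unfold K; pose proof (Rabs_pos al); pose proof (Rabs_pos be); lra).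
  destruct (H (eps / K) ltac:(apply Rdiv_lt_0_compat; lra)) as [d [Hd H']].
  exists (mkposreal d Hd). intros a b Ha Hb. simpl.
  specialize (H' a b Ha Hb). rewrite Lf_minus.
  eapply Rle_lt_trans; [apply Lf_bound|].
  apply Rle_lt_trans with (K * Cmod (h a b - h u v)%C).
  { apply Rmult_le_compat_r; [apply Cmod_ge_0| unfold K; lra]. }
  apply (Rmult_lt_compat_l K) in H'; auto. replace (K * (eps / K)) with eps in H' by (field; lra). auto.
Qed.

Lemma cont2d_ext (f g : R -> R -> R) s t d : 0 < d -> (forall u v, Rabs (u - s) < d -> f u v = g u v) ->
  continuity_2d_pt g s t -> continuity_2d_pt f s t.
Proof.
  intros Hd E H eps. destruct (H eps) as [d2 Hd2].
  exists (mkposreal (Rmin d d2) (Rmin_pos _ _ Hd (cond_pos d2))). simpl. intros u v Hu Hv.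
  assert (A1 : Rabs (u - s) < d) by (eapply Rlt_le_trans; [exact Hu| apply Rmin_l]).
  assert (A2 : Rabs (u - s) < d2) by (eapply Rlt_le_trans; [exact Hu| apply Rmin_r]).
  assert (B2 : Rabs (v - t) < d2) by (eapply Rlt_le_trans; [exact Hv| apply Rmin_r]).
  rewrite E, (E s t); auto. rewrite Rminus_eq_0, Rabs_R0; auto.
Qed.

Lemma Dr_Lf al be (p : R -> C) t v : Dr p t v -> is_derive (fun s => Lf al be (p s)) t (Lf al be v).
Proof.
  intros H. unfold Lf.
  apply (is_derive_plus (K:=R_AbsRing) (V:=R_NormedModule) (fun s => al * fst (p s)) (fun s => be * snd (p s))).
  - apply is_derive_scal. apply Dr_fst; auto.
  - apply is_derive_scal. apply Dr_snd; auto.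
Qed.

Lemma isCI_Lf al be f a b l : isCI f a b l -> is_RInt (fun t => Lf al be (f t)) a b (Lf al be l).
Proof.
  intros [H1 H2]. unfold Lf.
  pose proof (is_RInt_scal _ a b al _ H1) as A.
  pose proof (is_RInt_scal _ a b be _ H2) as B.
  exact (is_RInt_plus _ _ a b _ _ A B).
Qed.

Lemma pcont_Lf_continuous al be (f : R -> C) t : pcont f t -> continuous (fun s => Lf al be (f s)) t.
Proof.
  intros H. unfold Lf.
  apply (continuous_plus (fun s => al * fst (f s)) (fun s => be * snd (f s))).
  - apply (continuous_scal_r al (fun s => fst (f s))). apply pcont_continuous_fst; auto.
  - apply (continuous_scal_r be (fun s => snd (f s))). apply pcont_continuous_snd; auto.
Qed.

Lemma c2_ext (f g : R -> R -> C) u v : (forall a b, g a b = f a b) -> c2 g u v -> c2 f u v.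
Proof.
  intros E H eps Heps. destruct (H eps Heps) as [d [Hd H']]. exists d; split; auto.
  intros. rewrite <- !E. auto.
Qed.

Definition C1on (R0 : R) (F F1 : C -> C) : Prop :=
  forall y, Cmod y < R0 -> Dc F y (F1 y) /\ ccont F1 y.

Lemma pcont_wcz r z t : Cmod z < r -> pcont (fun t => / (wc r t - z))%C t.
Proof.
  intros Hz. apply pcont_inv. apply (pcont_plus (wc r) (fun _ => - z)%C). apply pcont_wc. apply pcont_const.
  apply wc_minus_nz; auto.
Qed.

Lemma Dr_path s r z t : Dr (fun t => z + RtoC s * (wc r t - z))%C t (RtoC s * (Ci * wc r t))%C.
Proof.
  apply (Dr_ext (fun t => RtoC s * wc r t + (z - RtoC s * z))%C). { intros; ring. }
  apply Dr_shift. apply Dr_cmul. apply Dr_wc.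
Qed.

Lemma pcont_path s r z t : pcont (fun t => z + RtoC s * (wc r t - z))%C t.
Proof. eapply Dr_cont. apply Dr_path. Qed.

Lemma phi_cont R0 F F1 r s : C1on R0 F F1 -> 0 <= r < R0 -> pcont (fun t => F (wc r t) * wc r t)%C s.
Proof.
  intros HC Hr. apply pcont_mult; [|apply pcont_wc].
  apply (pcont_comp F (wc r)); [|apply pcont_wc].
  destruct (HC (wc r s)) as [H1 _]. { rewrite Cmod_wc; lra. }
  eapply Dc_cont; eauto.
Qed.

Theorem cauchy R0 F F1 r z : C1on R0 F F1 -> 0 < r -> r < R0 -> Cmod z < r ->
  CT r (fun t => F (wc r t) * wc r t)%C 1 z = (F z * RtoC (2 * PI))%C.
Proof.
  intros HC Hr HR Hz. pose proof (Cmod_ge_0 z) as Hz0.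
  assert (Hpi : 0 < 2 * PI) by (pose proof PI_RGT_0; lra).
  set (p := fun u t => (z + RtoC u * (wc r t - z))%C).
  set (c := fun t => (wc r t * / (wc r t - z))%C).
  set (E := fun u t => (F (p u t) * c t)%C).
  set (D := fun u t => (F1 (p u t) * (wc r t - z) * c t)%C).
  set (d1 := (R0 - r) / (2 * r + 1)).
  assert (Hd1 : 0 < d1) by (unfold d1; apply Rdiv_lt_0_compat; lra).
  assert (Hpin : forall s u t, 0 <= s <= 1 -> Rabs (u - s) < d1 -> Cmod (p u t) < R0).
  { intros s u t Hs Hu.
    assert (A : Cmod (p s t) <= r).
    { unfold p. replace (z + RtoC s * (wc r t - z))%C with (RtoC (1 - s) * z + RtoC s * wc r t)%C
        by (rewrite RtoC_minus; ring).
      eapply Rle_trans; [apply Cmod_triangle|]. rewrite !Cmod_mult, !Cmod_R, Cmod_wc by lra.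
      rewrite !Rabs_pos_eq by lra. nra. }
    assert (B : Cmod (p u t - p s t) <= Rabs (u - s) * (2 * r)).
    { unfold p. replace (z + RtoC u * (wc r t - z) - (z + RtoC s * (wc r t - z)))%C
        with (RtoC (u - s) * (wc r t - z))%C by (rewrite RtoC_minus; ring).
      rewrite Cmod_mult, Cmod_R. apply Rmult_le_compat_l; [apply Rabs_pos|].
      eapply Rle_trans; [apply Cmod_triangle|]. rewrite Cmod_opp, Cmod_wc; lra. }
    pose proof (Cmod_triangle (p s t) (p u t - p s t)%C).
    replace (p s t + (p u t - p s t))%C with (p u t) in H by ring.
    assert (Rabs (u - s) * (2 * r) < d1 * (2 * r + 1)).
    { pose proof (Rabs_pos (u - s)). nra. }
    unfold d1 in H0. replace ((R0 - r) / (2 * r + 1) * (2 * r + 1)) with (R0 - r) in H0 by (field; lra).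
    lra. }
  assert (HcN : forall t, (wc r t - z)%C <> 0%C) by (intros; apply wc_minus_nz; auto).
  assert (Hcc : forall t, pcont c t).
  { intros t. unfold c. apply pcont_mult. apply pcont_wc. apply pcont_wcz; auto. }
  assert (DrE : forall s u t, 0 <= s <= 1 -> Rabs (u - s) < d1 -> Dr (fun u => E u t) u (D u t)).
  { intros s u t Hs Hu. unfold E, D. apply Dr_mult_const.
    apply (Dr_chain F (fun u => p u t)).
    - apply HC. eapply Hpin; eauto.
    - unfold p. eapply Dr_ext; [|apply (Dr_affine z (wc r t - z) u)]. intros; simpl; ring. }
  assert (HE : forall s y, 0 <= s <= 1 -> Rabs (y - s) < d1 -> isCI (E y) 0 (2 * PI) (CI (E y) 0 (2 * PI))).
  { intros s y Hs Hy. apply isCI_exists. intros t _. unfold E. apply pcont_mult; auto.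
    apply (pcont_comp F (p y)). 
    - destruct (HC (p y t)) as [H1 _]. { eapply Hpin; eauto. } eapply Dc_cont; eauto.
    - unfold p. apply pcont_path. }
  assert (HD0 : forall s, 0 <= s <= 1 -> isCI (D s) 0 (2 * PI) 0%C).
  { intros s Hs. destruct (Req_dec s 0) as [Hs0|Hs0].
    - subst s. set (P := fun t => (- Ci * F1 z * wc r t)%C).
      assert (HF := isCI_FTC P (fun t => (- Ci * F1 z) * (Ci * wc r t))%C 0 (2 * PI) ltac:(lra)
        (fun t _ => Dr_cmul (wc r) t _ (- Ci * F1 z)%C (Dr_wc r t))
        (fun t _ => pcont_mult _ _ t (pcont_const _ t) (pcont_mult _ _ t (pcont_const _ t) (pcont_wc r t)))).
      unfold P in HF. rewrite wc_2PI in HF.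
      replace (- Ci * F1 z * wc r 0 - - Ci * F1 z * wc r 0)%C with (RtoC 0) in HF by ring.
      eapply isCI_ext; [|exact HF]. intros t _. unfold D, c, p.
      replace (z + RtoC 0 * (wc r t - z))%C with z by ring.
      transitivity (- (Ci * Ci) * F1 z * wc r t)%C; [ring|]. rewrite Ci_sq.
      field. auto.
    - set (Q := fun t => F (p s t)).
      assert (HQ : forall t, Dr Q t (F1 (p s t) * (RtoC s * (Ci * wc r t)))%C).
      { intros t. unfold Q. apply (Dr_chain F (p s)).
        - apply HC. eapply (Hpin s); auto. rewrite Rminus_eq_0, Rabs_R0; auto.
        - unfold p. apply Dr_path. }
      assert (Hpc : forall t, pcont (fun t => F1 (p s t) * (RtoC s * (Ci * wc r t)))%C t).
      { intros t. apply pcont_mult.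
        - apply (pcont_comp F1 (p s)).
          + apply HC. eapply (Hpin s); auto. rewrite Rminus_eq_0, Rabs_R0; auto.
          + unfold p. apply pcont_path.
        - apply pcont_mult. apply pcont_const. apply pcont_mult. apply pcont_const. apply pcont_wc. }
      assert (HF := isCI_FTC Q _ 0 (2 * PI) ltac:(lra) (fun t _ => HQ t) (fun t _ => Hpc t)).
      unfold Q, p in HF. rewrite wc_2PI in HF.
      replace (F (z + RtoC s * (wc r 0 - z)) - F (z + RtoC s * (wc r 0 - z)))%C with (RtoC 0) in HF by ring.
      pose proof (isCI_cmul (/ (RtoC s * Ci))%C _ _ _ _ HF) as HF2. rewrite Cmult_0_r in HF2.
      eapply isCI_ext; [|exact HF2]. intros t _. unfold D, c, p.
      assert (RtoC s <> 0%C). { intro E0. apply Hs0. apply (f_equal fst) in E0. simpl in E0. auto. }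
      field. repeat split; auto. apply Ci_nz. }
  assert (Key : forall al be, RInt (fun t => Lf al be (E 0 t)) 0 (2 * PI) = RInt (fun t => Lf al be (E 1 t)) 0 (2 * PI)).
  { intros al be.
    apply (eq_is_derive (V:=R_NormedModule) (fun s => RInt (fun t => Lf al be (E s t)) 0 (2 * PI))); [|lra].
    intros s Hs.
    assert (Hd : is_derive (fun s => RInt (fun t => Lf al be (E s t)) 0 (2 * PI)) s
                   (RInt (fun t => Derive (fun u => Lf al be (E u t)) s) 0 (2 * PI))).
    { apply (is_derive_RInt_param (fun u t => Lf al be (E u t))).
      - exists (mkposreal d1 Hd1). intros x0 Hx0 t _. exists (Lf al be (D x0 t)).
        apply Dr_Lf. apply (DrE s); auto.
      - intros t _. apply (cont2d_ext _ (fun u v => Lf al be (D u v)) s t d1 Hd1).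
        + intros u v Hu. apply is_derive_unique. apply Dr_Lf. apply (DrE s); auto.
        + apply c2_cont2d. unfold D.
          apply (c2_ext _ (fun a b => F1 (p a b) * ((wc r b - z) * c b))%C). { intros; ring. }
          apply c2_mult.
          * apply (c2_comp F1 p).
            -- apply HC. eapply (Hpin s); auto. rewrite Rminus_eq_0, Rabs_R0; auto.
            -- unfold p. apply (c2_plus (fun a b => z) (fun a b => RtoC a * (wc r b - z))%C).
               apply c2_fstv. apply pcont_const.
               apply (c2_mult (fun a b => RtoC a) (fun a b => wc r b - z)%C).
               apply c2_fstv. apply pcont_RtoC.
               apply c2_sndv. apply (pcont_plus (wc r) (fun _ => - z)%C). apply pcont_wc. apply pcont_const.
          * apply c2_sndv. apply pcont_mult; auto.
            apply (pcont_plus (wc r) (fun _ => - z)%C). apply pcont_wc. apply pcont_const.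
      - exists (mkposreal d1 Hd1). intros y Hy. exists (Lf al be (CI (E y) 0 (2 * PI))).
        apply isCI_Lf. apply (HE s); auto. }
    assert (H0 : RInt (fun t => Derive (fun u => Lf al be (E u t)) s) 0 (2 * PI) = 0).
    2:{ rewrite H0 in Hd. exact Hd. }
    apply (is_RInt_unique (V:=R_CompleteNormedModule)).
    apply (is_RInt_ext (fun t => Lf al be (D s t))).
    + intros t _. symmetry. apply is_derive_unique. apply Dr_Lf. apply (DrE s); auto.
      rewrite Rminus_eq_0, Rabs_R0; auto.
    + assert (HH := isCI_Lf al be _ _ _ _ (HD0 s Hs)).
      replace (Lf al be (RtoC 0)) with 0 in HH by (unfold Lf; simpl; ring). exact HH. }
  assert (HE0 := HE 0 0 ltac:(lra) ltac:(rewrite Rminus_eq_0, Rabs_R0; auto)).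
  assert (HE1 := HE 1 1 ltac:(lra) ltac:(rewrite Rminus_eq_0, Rabs_R0; auto)).
  assert (Eq01 : CI (E 0) 0 (2 * PI) = CI (E 1) 0 (2 * PI)).
  { pose proof (Key 1 0) as K1. pose proof (Key 0 1) as K2.
    rewrite (is_RInt_unique (V:=R_CompleteNormedModule) _ _ _ _ (isCI_Lf 1 0 _ _ _ _ HE0)) in K1.
    rewrite (is_RInt_unique (V:=R_CompleteNormedModule) _ _ _ _ (isCI_Lf 1 0 _ _ _ _ HE1)) in K1.
    rewrite (is_RInt_unique (V:=R_CompleteNormedModule) _ _ _ _ (isCI_Lf 0 1 _ _ _ _ HE0)) in K2.
    rewrite (is_RInt_unique (V:=R_CompleteNormedModule) _ _ _ _ (isCI_Lf 0 1 _ _ _ _ HE1)) in K2.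
    unfold Lf in K1, K2. apply injective_projections; lra. }
  assert (V1 : CI (E 1) 0 (2 * PI) = CT r (fun t => F (wc r t) * wc r t)%C 1 z).
  { apply isCI_unique. eapply isCI_ext; [|apply isCT; auto].
    - intros t _. unfold E, kern, c, p. replace (z + RtoC 1 * (wc r t - z))%C with (wc r t) by ring.
      simpl. ring.
    - intros; eapply phi_cont; eauto; lra. }
  assert (V0 : CI (E 0) 0 (2 * PI) = (F z * RtoC (2 * PI))%C).
  { rewrite <- (CT1_wc r z) by auto. apply isCI_unique.
    eapply isCI_ext; [|apply isCI_cmul; apply isCT; auto].
    - intros t _. unfold E, kern, c, p. replace (z + RtoC 0 * (wc r t - z))%C with z by ring.
      simpl. ring.
    - intros; apply pcont_wc. }
  rewrite <- V1, <- Eq01, V0. auto.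
Qed.

Definition cc : C := RtoC (/ (2 * PI)).

Lemma cc_2PI : (cc * RtoC (2 * PI))%C = 1%C.
Proof.
  unfold cc. rewrite <- RtoC_mult. rewrite Rinv_l; auto. pose proof PI_RGT_0; lra.
Qed.

Lemma Dc_ball_ext (G H : C -> C) r y0 l : (forall y, Cmod y < r -> G y = H y) -> Cmod y0 < r ->
  Dc G y0 l -> Dc H y0 l.
Proof.
  intros E Hy D. apply (Dc_ext_loc G H y0 l (r - Cmod y0)); [lra| |auto].
  intros y Hy'. apply E. pose proof (Cmod_triangle y0 (y - y0)%C).
  replace (y0 + (y - y0))%C with y in H0 by ring. lra.
Qed.

Lemma Dc_CTk k r phi m y : (forall s, pcont phi s) -> Cmod y < r ->
  Dc (fun y => k * CT r phi m y)%C y (k * (RtoC (INR m) * CT r phi (S m) y))%C.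
Proof. intros. apply Dc_scal. apply CT_deriv; auto. Qed.

Lemma ccont_CTk k r phi m y : (forall s, pcont phi s) -> Cmod y < r ->
  ccont (fun y => k * CT r phi m y)%C y.
Proof. intros. eapply Dc_cont. apply Dc_CTk; auto. Qed.

Definition phiF (F : C -> C) (r : R) := fun t => (F (wc r t) * wc r t)%C.

Lemma phiF_cont R0 F F1 r (HC : C1on R0 F F1) (Hr : 0 < r) (HR : r < R0) s : pcont (phiF F r) s.
Proof. apply (phi_cont R0 F F1); auto. lra. Qed.

Lemma reg_F R0 F F1 r (HC : C1on R0 F F1) (Hr : 0 < r) (HR : r < R0) y : Cmod y < r -> F y = (cc * CT r (phiF F r) 1 y)%C.
Proof.
  intros Hy. unfold phiF. rewrite (cauchy R0 F F1 r y); auto.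
  transitivity (F y * (cc * RtoC (2 * PI)))%C. rewrite cc_2PI; ring. ring.
Qed.

Lemma reg_F1 R0 F F1 r (HC : C1on R0 F F1) (Hr : 0 < r) (HR : r < R0) y : Cmod y < r -> F1 y = (cc * (RtoC (INR 1) * CT r (phiF F r) 2 y))%C.
Proof.
  intros Hy. apply (Dc_unique F y).
  - apply HC. lra.
  - apply (Dc_ball_ext (fun y => cc * CT r (phiF F r) 1 y)%C F r); auto.
    + intros; symmetry; eapply reg_F; eauto.
    + apply Dc_CTk; auto. eapply phiF_cont; eauto.
Qed.

Lemma reg_F2 R0 F F1 r (HC : C1on R0 F F1) (Hr : 0 < r) (HR : r < R0) y f2 : Cmod y < r -> Dc F1 y f2 -> f2 = (cc * (RtoC (INR 2) * CT r (phiF F r) 3 y))%C.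
Proof.
  intros Hy HD. apply (Dc_unique F1 y); auto.
  apply (Dc_ball_ext (fun y => cc * (RtoC (INR 1) * CT r (phiF F r) 2 y))%C F1 r); auto.
  - intros; symmetry; eapply reg_F1; eauto.
  - apply (Dc_ext_loc (fun y => (cc * RtoC (INR 1)) * CT r (phiF F r) 2 y)%C _ _ _ 1); [lra| intros; ring|].
    apply (Dc_ext_val _ _ ((cc * RtoC (INR 1)) * (RtoC (INR 2) * CT r (phiF F r) 3 y))%C).
    { simpl. ring. }
    apply Dc_CTk; auto. eapply phiF_cont; eauto.
Qed.


Definition phiG (F : C -> C) (r : R) := fun t => (F (wc r t) * / wc r t)%C.

Lemma phiG_cont R0 F F1 r (HC : C1on R0 F F1) (Hr : 0 < r) (HR : r < R0) s : pcont (phiG F r) s.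
Proof.
  unfold phiG. apply pcont_mult.
  - apply (pcont_comp F (wc r)); [|apply pcont_wc].
    destruct (HC (wc r s)) as [H1 _]. { rewrite Cmod_wc; lra. } eapply Dc_cont; eauto.
  - apply pcont_inv. apply pcont_wc. apply wc_nz; auto.
Qed.

Lemma cc_nz_cancel (X : C) : (cc * X)%C = 0%C -> X = 0%C.
Proof.
  intros H. transitivity ((cc * RtoC (2 * PI)) * X)%C. rewrite cc_2PI; ring.
  transitivity (RtoC (2 * PI) * (cc * X))%C. ring. rewrite H. ring.
Qed.

Definition Gf (F : C -> C) (r : R) (y : C) : C := (cc * CT r (phiG F r) 1 y)%C.
Definition G1f (F : C -> C) (r : R) (y : C) : C := (cc * (RtoC (INR 1) * CT r (phiG F r) 2 y))%C.

Lemma rem2 R0 F F1 r (HC : C1on R0 F F1) (Hr : 0 < r) (HR : r < R0) :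
  F 0%C = 0%C -> F1 0%C = 0%C -> forall y, Cmod y < r -> F y = (y * y * Gf F r y)%C.
Proof.
  intros H0 H10 y Hy.
  assert (Hz0 : Cmod 0%C < r) by (rewrite Cmod_0; auto).
  pose proof (phiF_cont R0 F F1 r HC Hr HR) as HpF.
  pose proof (phiG_cont R0 F F1 r HC Hr HR) as HpG.
  assert (A0 : CT r (phiF F r) 1 0%C = 0%C).
  { apply cc_nz_cancel. rewrite <- (reg_F R0 F F1 r HC Hr HR); auto. }
  assert (A1 : CT r (phiF F r) 2 0%C = 0%C).
  { apply cc_nz_cancel. rewrite (reg_F1 R0 F F1 r HC Hr HR) in H10; auto.
    transitivity (cc * (RtoC (INR 1) * CT r (phiF F r) 2 0%C))%C; [|exact H10].
    simpl. ring. }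
  assert (HI := isCI_plus _ _ _ _ _ _
                 (isCI_plus _ _ _ _ _ _ (isCT r (phiF F r) 1 0%C HpF Hz0)
                    (isCI_cmul y _ _ _ _ (isCT r (phiF F r) 2 0%C HpF Hz0)))
                 (isCI_cmul (y * y)%C _ _ _ _ (isCT r (phiG F r) 1 y HpG Hy))).
  rewrite A0, A1 in HI.
  replace (RtoC 0 + y * RtoC 0 + y * y * CT r (phiG F r) 1 y)%C with (y * y * CT r (phiG F r) 1 y)%C in HI by ring.
  assert (E : CT r (phiF F r) 1 y = (y * y * CT r (phiG F r) 1 y)%C).
  { apply isCI_unique. eapply isCI_ext; [|exact HI].
    - intros t _. unfold kern, phiF, phiG. simpl.
      assert (wc r t <> 0%C) by (apply wc_nz; auto).
      assert ((wc r t - y)%C <> 0%C) by (apply wc_minus_nz; auto).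
      replace (wc r t - 0)%C with (wc r t) by ring. field. auto. }
  rewrite (reg_F R0 F F1 r HC Hr HR) by auto. rewrite E. unfold Gf. ring.
Qed.

Lemma rem2_G0 R0 F F1 r (HC : C1on R0 F F1) (Hr : 0 < r) (HR : r < R0) f20 :
  Dc F1 0%C f20 -> f20 = (RtoC 2 * Gf F r 0%C)%C.
Proof.
  intros HD. assert (Hz0 : Cmod 0%C < r) by (rewrite Cmod_0; auto).
  rewrite (reg_F2 R0 F F1 r HC Hr HR 0%C f20 Hz0 HD). unfold Gf.
  replace (CT r (phiF F r) 3 0%C) with (CT r (phiG F r) 1 0%C).
  { replace (INR 2) with 2 by (simpl; ring). ring. }
  unfold CT. f_equal. apply functional_extensionality. intros t. unfold kern, phiF, phiG. simpl.
  assert (wc r t <> 0%C) by (apply wc_nz; auto).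
  replace (wc r t - 0)%C with (wc r t) by ring. field. auto.
Qed.

Lemma rem2_C1 R0 F F1 r (HC : C1on R0 F F1) (Hr : 0 < r) (HR : r < R0) :
  C1on r (Gf F r) (G1f F r).
Proof.
  intros y Hy. pose proof (phiG_cont R0 F F1 r HC Hr HR) as HpG. split.
  - unfold Gf, G1f. apply Dc_CTk; auto.
  - unfold G1f. eapply Dc_cont. apply (Dc_ext_loc (fun y => (cc * RtoC (INR 1)) * CT r (phiG F r) 2 y)%C _ _ _ 1); [lra| intros; ring|].
    apply Dc_CTk; auto.
Qed.

Lemma ccont_plus (p q : C -> C) t : ccont p t -> ccont q t -> ccont (fun s => p s + q s)%C t.
Proof.
  intros Hp Hq eps Heps.
  destruct (Hp (eps/2) ltac:(lra)) as [d1 [Hd1 H1]].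
  destruct (Hq (eps/2) ltac:(lra)) as [d2 [Hd2 H2]].
  exists (Rmin d1 d2). split; [apply Rmin_pos; auto|]. intros s Hs.
  assert (A1 : Cmod (s - t) < d1) by (eapply Rlt_le_trans; [exact Hs| apply Rmin_l]).
  assert (A2 : Cmod (s - t) < d2) by (eapply Rlt_le_trans; [exact Hs| apply Rmin_r]).
  specialize (H1 s A1). specialize (H2 s A2).
  replace (p s + q s - (p t + q t))%C with ((p s - p t) + (q s - q t))%C by ring.
  eapply Rle_lt_trans; [apply Cmod_triangle|]. lra.
Qed.

Lemma ccont_mult (p q : C -> C) t : ccont p t -> ccont q t -> ccont (fun s => p s * q s)%C t.
Proof.
  intros Hp Hq eps Heps.
  set (A := Cmod (p t)). set (B := Cmod (q t)).
  assert (HA : 0 <= A) by apply Cmod_ge_0. assert (HB : 0 <= B) by apply Cmod_ge_0.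
  set (e := Rmin 1 (eps / (2 * (1 + A + B)))).
  assert (He : 0 < e) by (apply Rmin_pos; [lra| apply Rdiv_lt_0_compat; lra]).
  assert (He1 : e <= 1) by apply Rmin_l.
  assert (He2 : e * (1 + A + B) <= eps / 2).
  { assert (e <= eps / (2 * (1 + A + B))) by apply Rmin_r.
    apply (Rmult_le_compat_r (1 + A + B)) in H; [|lra]. field_simplify in H; lra. }
  destruct (Hp e He) as [d1 [Hd1 H1]].
  destruct (Hq e He) as [d2 [Hd2 H2]].
  exists (Rmin d1 d2). split; [apply Rmin_pos; auto|]. intros s Hs.
  assert (A1 : Cmod (s - t) < d1) by (eapply Rlt_le_trans; [exact Hs| apply Rmin_l]).
  assert (A2 : Cmod (s - t) < d2) by (eapply Rlt_le_trans; [exact Hs| apply Rmin_r]).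
  specialize (H1 s A1). specialize (H2 s A2).
  replace (p s * q s - p t * q t)%C with
    ((p s - p t) * (q s - q t) + (p s - p t) * q t + p t * (q s - q t))%C by ring.
  eapply Rle_lt_trans; [apply Cmod_triangle|].
  eapply Rle_lt_trans; [apply Rplus_le_compat_r; apply Cmod_triangle|].
  rewrite !Cmod_mult. fold A B.
  pose proof (Cmod_ge_0 (p s - p t)%C). pose proof (Cmod_ge_0 (q s - q t)%C).
  assert (Cmod (p s - p t) * Cmod (q s - q t) <= e * e) by (apply Rmult_le_compat; lra).
  assert (Cmod (p s - p t) * B <= e * B) by (apply Rmult_le_compat_r; lra).
  assert (A * Cmod (q s - q t) <= A * e) by (apply Rmult_le_compat_l; lra).
  assert (e * e <= e * 1) by (apply Rmult_le_compat_l; lra).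
  assert (e * B + A * e + e * e <= e * (1 + A + B)) by nra.
  lra.
Qed.

Lemma conj_mult_self (x : C) : (x * Cconj x)%C = RtoC (Cmod x * Cmod x).
Proof.
  rewrite Cmod_sq. destruct x as [a b]. apply injective_projections; simpl; ring.
Qed.

Theorem maxp R0 K K1 rho zeta M : C1on R0 K K1 -> 0 < rho -> rho < R0 -> Cmod zeta < rho ->
  (forall t, Cmod (K (wc rho t)) <= M) -> Cmod (K zeta) <= M.
Proof.
  intros HC Hr HR Hz HM.
  pose proof (Cmod_ge_0 zeta) as Hz0.
  set (a := RtoC (rho * rho)). set (b := Cconj zeta).
  assert (Hb : Cmod b = Cmod zeta) by apply Cmod_conj.
  set (R1 := Rmin R0 (2 * rho * rho / (rho + Cmod zeta))).
  assert (HR1 : rho < R1).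
  { unfold R1. apply Rmin_glb_lt; auto. apply Rmult_lt_reg_r with (rho + Cmod zeta); [lra|].
    field_simplify; [|lra]. nra. }
  assert (Hden : forall y, Cmod y < R1 -> Cmod zeta * Cmod y < rho * rho).
  { intros y Hy. assert (Cmod y < 2 * rho * rho / (rho + Cmod zeta)) by (eapply Rlt_le_trans; [exact Hy|apply Rmin_r]).
    pose proof (Cmod_ge_0 y).
    assert (Cmod zeta * Cmod y <= Cmod zeta * (2 * rho * rho / (rho + Cmod zeta))) by (apply Rmult_le_compat_l; lra).
    assert (Cmod zeta * (2 * rho * rho / (rho + Cmod zeta)) < rho * rho).
    { replace (Cmod zeta * (2 * rho * rho / (rho + Cmod zeta))) with (rho*rho * (2*Cmod zeta/(rho + Cmod zeta))) by (field; lra).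
      assert (2 * Cmod zeta / (rho + Cmod zeta) < 1).
      { apply Rmult_lt_reg_r with (rho+Cmod zeta); [lra|]. unfold Rdiv. rewrite Rmult_assoc, Rinv_l by lra. lra. }
      assert (0 < rho * rho) by nra. nra. }
    lra. }
  assert (HR1' : R1 <= R0) by apply Rmin_l.
  assert (HnZ : forall y, Cmod y < R1 -> (a - b * y)%C <> 0%C).
  { intros y Hy E. pose proof (Hden y Hy).
    pose proof (Cmod_triangle (a - b * y)%C (b * y)%C). replace (a - b * y + b * y)%C with a in H0 by ring.
    rewrite E, Cmod_0, Cmod_mult, Hb in H0. unfold a in H0. rewrite Cmod_R, Rabs_pos_eq in H0 by nra. lra. }
  set (q := fun y => (a * / (a - b * y))%C).
  set (q1 := fun y => (a * b * / ((a - b * y) * (a - b * y)))%C).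
  assert (Hlin : forall y, Dc (fun y => a - b * y)%C y (- b)%C).
  { intros y. apply (Dc_ext_val _ _ (0 - b * 1)%C); [ring|]. apply Dc_minus. apply Dc_const. apply Dc_scal. apply Dc_id. }
  assert (Hq : forall y, Cmod y < R1 -> Dc q y (q1 y)).
  { intros y Hy. unfold q, q1. apply (Dc_ext_val _ _ (a * ((- b) * (- / ((a - b * y) * (a - b * y)))))%C); [ring|].
    apply Dc_scal. apply (Dc_comp (fun u => / u)%C (fun y => a - b * y)%C). apply Hlin. apply Dc_inv. auto. }
  assert (Hq1c : forall y, Cmod y < R1 -> ccont q1 y).
  { intros y Hy. unfold q1. apply ccont_mult. eapply Dc_cont; apply Dc_const.
    eapply Dc_cont. apply (Dc_comp (fun u => / u)%C (fun y => (a - b * y) * (a - b * y))%C).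
    apply Dc_mult; apply Hlin. apply Dc_inv. apply Cmult_neq_0; auto. }
  assert (Cq : C1on R1 q q1).
  { intros y Hy. split; auto. }
  assert (CKq : C1on R1 (fun y => K y * q y)%C (fun y => K1 y * q y + K y * q1 y)%C).
  { intros y Hy. destruct (HC y ltac:(lra)) as [HK1 HK2]. split.
    - apply Dc_mult; auto.
    - apply ccont_plus; apply ccont_mult; auto; eapply Dc_cont; eauto. }
  assert (C1 := cauchy R1 _ _ rho zeta CKq Hr HR1 Hz).
  assert (C2 := cauchy R1 _ _ rho zeta Cq Hr HR1 Hz).
  assert (I1 := isCT rho _ 1 zeta (fun s => phi_cont R1 _ _ rho s CKq ltac:(lra)) Hz).
  assert (I2 := isCT rho _ 1 zeta (fun s => phi_cont R1 _ _ rho s Cq ltac:(lra)) Hz).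
  cbv beta in C1, I1, C2, I2. rewrite C1 in I1. rewrite C2 in I2.
  set (Pt := fun t => rho * rho / (Cmod (wc rho t - zeta) * Cmod (wc rho t - zeta))).
  assert (HPt : forall t, 0 <= Pt t).
  { intros t. unfold Pt. apply Rmult_le_pos; [nra|]. apply Rlt_le, Rinv_0_lt_compat.
    assert (0 < Cmod (wc rho t - zeta)) by (apply Cmod_gt_0; apply wc_minus_nz; auto). nra. }
  assert (Hker : forall t, kern rho (fun t => q (wc rho t) * wc rho t)%C 1 zeta t = RtoC (Pt t)).
  { intros t. unfold kern, q, Pt. simpl.
    set (w := wc rho t).
    assert (Hw : w <> 0%C) by (apply wc_nz; auto).
    assert (Hwz : (w - zeta)%C <> 0%C) by (apply wc_minus_nz; auto).
    assert (Hm : Cmod (w - zeta) <> 0) by (intro E; apply Hwz; apply Cmod_eq_0; auto).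
    rewrite RtoC_div by (intro E; apply Hm; nra).
    rewrite <- conj_mult_self.
    assert (Ha : a = (w * Cconj w)%C).
    { rewrite conj_mult_self. unfold w. rewrite Cmod_wc by lra. reflexivity. }
    fold a. rewrite Ha. unfold b. rewrite Cminus_conj.
    assert (Hcz : (Cconj w - Cconj zeta)%C <> 0%C).
    { rewrite <- Cminus_conj. intro E. apply Hwz. rewrite <- (Cconj_conj (w - zeta)%C), E.
      apply injective_projections; simpl; ring. }
    assert (Hcw : Cconj w <> 0%C).
    { intro E. apply Hw. rewrite <- (Cconj_conj w), E. apply injective_projections; simpl; ring. }
    field. repeat split; auto. replace (w * Cconj w - Cconj zeta * w)%C with (w * (Cconj w - Cconj zeta))%C by ring. apply Cmult_neq_0; auto. }
  set (Q := rho * rho / (rho * rho - Cmod zeta * Cmod zeta)).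
  assert (HQ0 : 0 < Q).
  { unfold Q. apply Rdiv_lt_0_compat; [nra|]. pose proof (Hden zeta ltac:(lra)). lra. }
  assert (Hqz : q zeta = RtoC Q).
  { unfold q, Q, b. rewrite RtoC_div by (pose proof (Hden zeta ltac:(lra)); lra).
    rewrite RtoC_minus. rewrite (Cmult_comm (Cconj zeta)), conj_mult_self. reflexivity. }
  rewrite Hqz in I1, I2.
  assert (I2' : is_RInt Pt 0 (2 * PI) (Q * (2 * PI))).
  { destruct I2 as [I2a _].
    replace (Q * (2*PI)) with (fst (RtoC Q * RtoC (2*PI))%C) by (simpl; ring).
    eapply is_RInt_ext; [|exact I2a]. intros t _. transitivity (fst (RtoC (Pt t))); [f_equal; apply Hker | reflexivity]. }
  assert (I1' : isCI (fun t => K (wc rho t) * RtoC (Pt t))%C 0 (2 * PI) (K zeta * RtoC Q * RtoC (2 * PI))%C).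
  { eapply isCI_ext; [|exact I1]. intros t _.
    transitivity (K (wc rho t) * kern rho (fun t => q (wc rho t) * wc rho t) 1 zeta t)%C.
    unfold kern; ring. rewrite Hker; reflexivity. }
  assert (Hg := is_RInt_scal _ 0 (2 * PI) M _ I2').
  assert (Hbd := isCI_bound _ (fun t => M * Pt t) 0 (2 * PI) _ _ ltac:(pose proof PI_RGT_0; lra) I1' Hg).
  rewrite !Cmod_mult, !Cmod_R in Hbd. rewrite !Rabs_pos_eq in Hbd by (pose proof PI_RGT_0; lra).
  assert (Hbd2 : Cmod (K zeta) * (Q * (2 * PI)) <= M * (Q * (2 * PI))).
  { change (scal M (Q * (2 * PI))) with (M * (Q * (2 * PI))) in Hbd. rewrite <- Rmult_assoc.
    apply Hbd. intros t _. rewrite Cmod_mult, Cmod_R, Rabs_pos_eq by auto.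
    apply Rmult_le_compat_r; auto. }
  assert (0 < Q * (2 * PI)) by (pose proof PI_RGT_0; nra).
  apply Rmult_le_reg_r with (Q * (2 * PI)); auto.
Qed.

Lemma ccont_id (y : C) : ccont (fun x => x) y.
Proof. eapply Dc_cont. apply Dc_id. Qed.
Lemma ccont_const (c y : C) : ccont (fun _ => c) y.
Proof. eapply Dc_cont. apply Dc_const. Qed.

Lemma le_of_forall_rho (x c m : R) : 0 <= c -> 0 <= m < 1 ->
  (forall rho, m < rho < 1 -> x <= c / (rho * rho)) -> x <= c.
Proof.
  intros Hc Hm H. destruct (Rle_or_lt x c) as [|Hx]; auto. exfalso.
  assert (Hx0 : 0 < x) by lra.
  set (tau := Rmax m (c / x)).
  assert (Hcx : c / x < 1) by (apply Rmult_lt_reg_r with x; auto; unfold Rdiv; rewrite Rmult_assoc, Rinv_l; lra).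
  assert (Ht1 : tau < 1) by (unfold tau; apply Rmax_lub_lt; lra).
  assert (Ht0 : m <= tau) by apply Rmax_l.
  assert (Ht2 : c / x <= tau) by apply Rmax_r.
  set (rho := (1 + tau) / 2).
  assert (Hr : m < rho < 1) by (unfold rho; lra).
  specialize (H rho Hr).
  assert (Hrr : tau < rho * rho) by (unfold rho; nra).
  assert (0 < rho * rho) by nra.
  assert (c / (rho * rho) < x).
  { apply Rmult_lt_reg_r with (rho * rho); auto. unfold Rdiv. rewrite Rmult_assoc, Rinv_l by lra.
    assert (c <= tau * x).
    { apply Rmult_le_reg_r with (/ x). apply Rinv_0_lt_compat; auto.
      rewrite Rmult_assoc, Rinv_r by lra. lra. }
    nra. }
  lra.
Qed.


Definition gfun (f f1 : C -> C) := fun y => (y * f1 y - f y)%C.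
Definition kfun (f f1 f2 : C -> C) := fun y => (y * y * f2 y + y * f1 y - f y)%C.

Lemma loc_data (f f1 f2 : C -> C) r0 :
  (forall y, Cmod y < 1 -> Dc f y (f1 y)) -> (forall y, Cmod y < 1 -> Dc f1 y (f2 y)) ->
  f 0%C = 0%C -> 0 < r0 < 1 ->
  (forall y, Cmod y < r0 -> gfun f f1 y = (y * y * Gf (gfun f f1) r0 y)%C) /\
  C1on r0 (Gf (gfun f f1) r0) (G1f (gfun f f1) r0) /\
  (RtoC 2 * Gf (gfun f f1) r0 0%C)%C = f2 0%C /\
  (forall y, Cmod y < r0 -> kfun f f1 f2 y = (y * y * Gf (kfun f f1 f2) r0 y)%C) /\
  C1on r0 (Gf (kfun f f1 f2) r0) (G1f (kfun f f1 f2) r0).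
Proof.
  intros Hf Hf1 Hf0 Hr0.
  set (r1 := (r0 + 1) / 2).
  assert (Hr1 : r0 < r1 < 1) by (unfold r1; lra).
  assert (C0 : C1on 1 f f1). { intros y Hy. split; auto. eapply Dc_cont; eauto. }
  set (f3 := fun y => (cc * RtoC (INR 2) * (RtoC (INR 3) * CT r1 (phiF f r1) 4 y))%C).
  assert (Hpf := phiF_cont 1 f f1 r1 C0 ltac:(lra) ltac:(lra)).
  assert (Hf2e : forall y, Cmod y < r1 -> f2 y = (cc * RtoC (INR 2) * CT r1 (phiF f r1) 3 y)%C).
  { intros y Hy. rewrite (reg_F2 1 f f1 r1 C0 ltac:(lra) ltac:(lra) y (f2 y) Hy (Hf1 y ltac:(lra))). ring. }
  assert (Hf3 : forall y, Cmod y < r1 -> Dc f2 y (f3 y)).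
  { intros y Hy. apply (Dc_ball_ext (fun y => cc * RtoC (INR 2) * CT r1 (phiF f r1) 3 y)%C f2 r1); auto.
    intros; symmetry; auto. unfold f3. apply Dc_CTk; auto. }
  assert (Hf3c : forall y, Cmod y < r1 -> ccont f3 y).
  { intros y Hy. apply (Dc_cont _ _ ((cc*RtoC (INR 2)*RtoC (INR 3)) * (RtoC (INR 4) * CT r1 (phiF f r1) 5 y))%C).
    apply (Dc_ext_loc (fun y => (cc*RtoC (INR 2)*RtoC (INR 3)) * CT r1 (phiF f r1) 4 y)%C _ _ _ 1); [lra | intros; unfold f3; ring |].
    apply Dc_CTk; auto. }
  assert (Hf2c : forall y, Cmod y < r1 -> ccont f2 y) by (intros; eapply Dc_cont; eauto).
  assert (Cg : C1on r1 (gfun f f1) (fun y => y * f2 y)%C).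
  { intros y Hy. split.
    - unfold gfun. apply (Dc_ext_val _ _ ((1 * f1 y + y * f2 y) - f1 y)%C); [ring|].
      apply Dc_minus. apply Dc_mult. apply Dc_id. apply Hf1; lra. apply Hf; lra.
    - apply ccont_mult. apply ccont_id. auto. }
  assert (g0 : gfun f f1 0%C = 0%C) by (unfold gfun; rewrite Hf0; ring).
  assert (g10 : (0 * f2 0)%C = 0%C) by ring.
  assert (Dg1 : Dc (fun y => y * f2 y)%C 0%C (f2 0%C)).
  { apply (Dc_ext_val _ _ (1 * f2 0%C + 0 * f3 0%C)%C); [ring|]. apply Dc_mult. apply Dc_id.
    apply Hf3. rewrite Cmod_0; lra. }
  assert (Ck : C1on r1 (kfun f f1 f2) (fun y => RtoC 3 * y * f2 y + y * y * f3 y)%C).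
  { intros y Hy. split.
    - unfold kfun. apply (Dc_ext_val _ _ (((1 * y + y * 1) * f2 y + y * y * f3 y) + (1 * f1 y + y * f2 y) - f1 y)%C).
      { replace (RtoC 3) with (1 + 1 + 1)%C by (apply injective_projections; simpl; ring). ring. }
      apply (Dc_minus (fun y => y*y*f2 y + y*f1 y)%C f).
      apply (Dc_plus (fun y => y*y*f2 y)%C (fun y => y*f1 y)%C).
      apply (Dc_mult (fun y => y*y)%C f2). apply (Dc_mult (fun y => y) (fun y => y)); apply Dc_id. apply Hf3; auto.
      apply (Dc_mult (fun y => y) f1). apply Dc_id. apply Hf1; lra.
      apply Hf; lra.
    - apply (ccont_plus (fun y => RtoC 3 * y * f2 y)%C (fun y => y * y * f3 y)%C).
      + apply (ccont_mult (fun y => RtoC 3 * y)%C f2); auto.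
        apply (ccont_mult (fun _ => RtoC 3) (fun y => y)). apply ccont_const. apply ccont_id.
      + apply (ccont_mult (fun y => y * y)%C f3); auto.
        apply (ccont_mult (fun y => y) (fun y => y)); apply ccont_id. }
  assert (k0 : kfun f f1 f2 0%C = 0%C) by (unfold kfun; rewrite Hf0; ring).
  assert (k10 : (RtoC 3 * 0 * f2 0 + 0 * 0 * f3 0)%C = 0%C) by ring.
  split; [|split; [|split; [|split]]].
  - apply (rem2 r1 _ _ r0 Cg ltac:(lra) ltac:(lra) g0 g10).
  - apply (rem2_C1 r1 _ _ r0 Cg ltac:(lra) ltac:(lra)).
  - symmetry. apply (rem2_G0 r1 _ _ r0 Cg ltac:(lra) ltac:(lra) _ Dg1).
  - apply (rem2 r1 _ _ r0 Ck ltac:(lra) ltac:(lra) k0 k10).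
  - apply (rem2_C1 r1 _ _ r0 Ck ltac:(lra) ltac:(lra)).
Qed.

Lemma is_RInt_sq01 : is_RInt (fun t => t * t) 0 1 (1/3).
Proof.
  assert (H1 : forall x, Rmin 0 1 <= x <= Rmax 0 1 -> is_derive (fun t => t*t*t/3) x (x * x)).
  { intros x _. auto_derive; auto. field. }
  assert (H2 : forall x, Rmin 0 1 <= x <= Rmax 0 1 -> continuous (fun t => t * t) x).
  { intros x _. apply continuity_pt_filterlim. apply continuity_pt_mult; apply continuity_pt_id. }
  pose proof (is_RInt_derive (V:=R_CompleteNormedModule) (fun t => t*t*t/3) (fun t => t*t) 0 1 H1 H2) as HH.
  cbv beta in HH. match type of HH with is_RInt _ _ _ ?v => replace v with (1/3) in HH end. exact HH.
  change (1 / 3 = 1*1*1/3 + - (0*0*0/3)). field.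
Qed.

Lemma g_bound (f f1 f2 : C -> C) lam :
  (forall y, Cmod y < 1 -> Dc f y (f1 y)) -> (forall y, Cmod y < 1 -> Dc f1 y (f2 y)) ->
  f 0%C = 0%C -> 0 < lam ->
  (forall y, Cmod y < 1 -> Cmod (kfun f f1 f2 y) <= 3 * lam) ->
  forall z, Cmod z < 1 -> Cmod (gfun f f1 z) <= lam * (Cmod z * Cmod z).
Proof.
  intros Hf Hf1 Hf0 Hlam Hk z Hz.
  destruct (Ceq_dec z 0) as [->|Hz0].
  { unfold gfun. rewrite Hf0. replace (0 * f1 0 - 0)%C with (RtoC 0) by ring. rewrite Cmod_0. nra. }
  set (m := Cmod z). assert (Hm : 0 < m) by (apply Cmod_gt_0; auto).
  apply (le_of_forall_rho _ _ m); [nra| split; [lra|auto]|].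
  intros rho Hrho.
  set (r0 := (rho + 1) / 2).
  destruct (loc_data f f1 f2 r0 Hf Hf1 Hf0 ltac:(unfold r0; lra)) as [_ [_ [_ [Hke CK]]]].
  set (K := Gf (kfun f f1 f2) r0) in *.
  assert (HK : forall zeta, Cmod zeta < rho -> Cmod (K zeta) <= 3 * lam / (rho * rho)).
  { intros zeta Hzeta. apply (maxp r0 K (G1f (kfun f f1 f2) r0) rho zeta); auto; try (unfold r0; lra).
    intros t. assert (Hw : Cmod (wc rho t) = rho) by (apply Cmod_wc; lra).
    assert (Hw1 : Cmod (wc rho t) < r0) by (unfold r0; lra).
    pose proof (Hk (wc rho t) ltac:(lra)) as H1. rewrite (Hke _ Hw1) in H1.
    rewrite !Cmod_mult, Hw in H1.
    apply Rmult_le_reg_r with (rho * rho); [nra|]. unfold Rdiv. rewrite Rmult_assoc, Rinv_l by nra. lra. }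
  set (H := fun y => (y * gfun f f1 y)%C).
  set (I := fun t : R => (RtoC t * z * (RtoC t * z) * K (RtoC t * z) * z)%C).
  assert (Hin : forall t, 0 <= t <= 1 -> Cmod (RtoC t * z)%C <= m).
  { intros t Ht. rewrite Cmod_mult, Cmod_R, Rabs_pos_eq by lra. fold m. nra. }
  assert (HD : forall t, 0 <= t <= 1 -> Dr (fun t => H (RtoC t * z)%C) t (I t)).
  { intros t Ht. specialize (Hin t Ht).
    apply (Dr_ext_val _ _ (kfun f f1 f2 (RtoC t * z) * z)%C).
    { unfold I. rewrite Hke by (unfold r0; lra). ring. }
    apply (Dr_chain H (fun t => RtoC t * z)%C).
    - unfold H, gfun. set (y := (RtoC t * z)%C) in *.
      apply (Dc_ext_val _ _ (1 * (y * f1 y - f y) + y * ((1 * f1 y + y * f2 y) - f1 y))%C).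
      { unfold kfun. ring. }
      apply (Dc_mult (fun y => y) (fun y => y * f1 y - f y)%C). apply Dc_id.
      apply (Dc_minus (fun y => y * f1 y)%C f). apply (Dc_mult (fun y => y) f1). apply Dc_id.
      apply Hf1; lra. apply Hf; lra.
    - eapply Dr_ext; [|apply (Dr_affine 0 z t)]. intros; simpl; ring. }
  assert (Hc : forall t, 0 <= t <= 1 -> pcont I t).
  { intros t Ht. unfold I. specialize (Hin t Ht).
    assert (Hp : pcont (fun t => RtoC t * z)%C t) by (apply pcont_mult; [apply pcont_RtoC|apply pcont_const]).
    apply pcont_mult; [|apply pcont_const]. apply pcont_mult. apply pcont_mult; auto.
    apply (pcont_comp K (fun t => RtoC t * z)%C); auto.
    destruct (CK (RtoC t * z)%C ltac:(unfold r0; lra)) as [D1 _]. eapply Dc_cont; eauto. }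
  assert (HF := isCI_FTC (fun t => H (RtoC t * z)%C) I 0 1 ltac:(lra) HD Hc).
  unfold H in HF. cbv beta in HF.
  replace (RtoC 1 * z * gfun f f1 (RtoC 1 * z) - RtoC 0 * z * gfun f f1 (RtoC 0 * z))%C
    with (z * gfun f f1 z)%C in HF by (replace (RtoC 1 * z)%C with z by ring; ring).
  set (C0 := m * m * m * (3 * lam / (rho * rho))).
  assert (HC0 : 0 <= C0) by (unfold C0; apply Rmult_le_pos; [nra|]; apply Rmult_le_pos; [lra|]; apply Rlt_le, Rinv_0_lt_compat; nra).
  assert (Hg := is_RInt_scal _ 0 1 C0 _ is_RInt_sq01).
  assert (Hbd := isCI_bound I (fun t => scal C0 (t * t)) 0 1 _ _ ltac:(lra) HF Hg).
  change (scal C0 (1/3)) with (C0 * (1/3)) in Hbd.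
  assert (Hbd2 : Cmod (z * gfun f f1 z)%C <= C0 * (1/3)).
  { apply Hbd. intros t Ht. change (scal C0 (t * t)) with (C0 * (t * t)). unfold I.
    rewrite !Cmod_mult, Cmod_R, Rabs_pos_eq by lra. fold m.
    assert (Cmod (RtoC t * z)%C < rho) by (specialize (Hin t Ht); lra).
    specialize (HK _ H0). pose proof (Cmod_ge_0 (K (RtoC t * z))%C).
    unfold C0. assert (0 <= t * m) by nra.
    replace (t * m * (t * m) * Cmod (K (RtoC t * z)%C) * m) with ((t * t * (m * m * m)) * Cmod (K (RtoC t * z)%C)) by ring.
    replace (m * m * m * (3 * lam / (rho * rho)) * (t * t)) with ((t * t * (m * m * m)) * (3 * lam / (rho * rho))) by ring.
    apply Rmult_le_compat_l; auto. assert (0 <= t * t) by nra. apply Rmult_le_pos; auto. nra. }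
  rewrite Cmod_mult in Hbd2. fold m in Hbd2. unfold C0 in Hbd2.
  apply Rmult_le_reg_l with m; auto.
  replace (m * (lam * (m * m) / (rho * rho))) with (m * m * m * (3 * lam / (rho * rho)) * (1 / 3)) by (field; nra).
  auto.
Qed.

Lemma part1 (lam : R) (Hlam : 0 < lam) (f f1 f2 : C -> C) :
  derivative_on_D f f1 -> derivative_on_D f1 f2 -> f 0%C = 0%C -> f1 0%C = 1%C ->
  (forall z, inD z -> Cmod (z ^ 2 * f2 z + z * f1 z - f z)%C <= 3 * lam) -> Omega lam f.
Proof.
  intros Hd1 Hd2 Hf0 Hf10 Hb.
  assert (Hf : forall y, Cmod y < 1 -> Dc f y (f1 y)) by (intros; apply Dc_iff; apply Hd1; auto).
  assert (Hf1 : forall y, Cmod y < 1 -> Dc f1 y (f2 y)) by (intros; apply Dc_iff; apply Hd2; auto).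
  assert (Hk : forall y, Cmod y < 1 -> Cmod (kfun f f1 f2 y) <= 3 * lam).
  { intros y Hy. unfold kfun. replace (y * y * f2 y + y * f1 y - f y)%C with (y ^ 2 * f2 y + y * f1 y - f y)%C by ring.
    apply Hb; auto. }
  assert (Hg := g_bound f f1 f2 lam Hf Hf1 Hf0 Hlam Hk).
  assert (Hl0 : RtoC lam <> 0%C) by (intro E; apply (f_equal fst) in E; simpl in E; lra).
  assert (H20 : RtoC 2 <> 0%C) by (intro E; apply (f_equal fst) in E; simpl in E; lra).
  set (phi := fun y => if Ceq_dec y 0 then (f2 0%C * / (RtoC 2 * RtoC lam))%C
                        else (gfun f f1 y * / (RtoC lam * (y * y)))%C).
  assert (Hphi : forall r0, 0 < r0 < 1 -> forall y, Cmod y < r0 ->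
            (/ RtoC lam * Gf (gfun f f1) r0 y)%C = phi y).
  { intros r0 Hr0 y Hy. destruct (loc_data f f1 f2 r0 Hf Hf1 Hf0 Hr0) as [Hge [_ [HG0 _]]].
    unfold phi. destruct (Ceq_dec y 0) as [->|Hy0].
    - rewrite <- HG0. field. auto.
    - rewrite (Hge y Hy). field. auto. }
  exists f1. split; [exact Hd1|]. split; [exact Hf0|]. split; [exact Hf10|].
  exists phi. split; [|split].
  - intros z Hz. unfold inD in Hz. set (r0 := (Cmod z + 1) / 2).
    pose proof (Cmod_ge_0 z).
    assert (Hr0 : 0 < r0 < 1) by (unfold r0; lra).
    destruct (loc_data f f1 f2 r0 Hf Hf1 Hf0 Hr0) as [_ [CG _]].
    exists (/ RtoC lam * G1f (gfun f f1) r0 z)%C. apply Dc_iff.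
    apply (Dc_ball_ext (fun y => / RtoC lam * Gf (gfun f f1) r0 y)%C phi r0).
    + intros; apply Hphi; auto.
    + unfold r0; lra.
    + apply Dc_scal. apply CG. unfold r0; lra.
  - intros z Hz. unfold inD in Hz. unfold phi. destruct (Ceq_dec z 0) as [->|Hz0].
    + set (r0 := 1/2). destruct (loc_data f f1 f2 r0 Hf Hf1 Hf0 ltac:(unfold r0; lra)) as [Hge [CG [HG0 _]]].
      rewrite <- HG0. set (G := Gf (gfun f f1) r0) in *.
      assert (HG : Cmod (G 0%C) <= lam).
      { destruct (Rle_or_lt (Cmod (G 0%C)) lam) as [|Hgt]; auto. exfalso.
        destruct (CG 0%C ltac:(rewrite Cmod_0; unfold r0; lra)) as [D0 _].
        destruct (Dc_cont _ _ _ D0 (Cmod (G 0%C) - lam) ltac:(lra)) as [d [Hd Hc]].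
        set (e := Rmin d r0 / 2). assert (Hmn : 0 < Rmin d r0) by (apply Rmin_pos; unfold r0 in *; lra).
        assert (He : 0 < e) by (unfold e; lra).
        assert (He1 : e < d) by (unfold e; pose proof (Rmin_l d r0); lra).
        assert (He2 : e < r0) by (unfold e; pose proof (Rmin_r d r0); unfold r0 in *; lra).
        assert (Hy : Cmod (RtoC e) = e) by (rewrite Cmod_R, Rabs_pos_eq; lra).
        assert (Hy0 : RtoC e <> 0%C) by (intro E; rewrite E, Cmod_0 in Hy; lra).
        specialize (Hc (RtoC e) ltac:(replace (RtoC e - 0)%C with (RtoC e) by ring; lra)).
        assert (HGy : Cmod (G (RtoC e)) <= lam).
        { assert (Hey : Cmod (RtoC e) < 1) by (rewrite Hy; unfold r0 in *; lra).
          pose proof (Hg (RtoC e) Hey) as H1. rewrite (Hge _ ltac:(rewrite Hy; lra)) in H1.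
          rewrite !Cmod_mult, Hy in H1. apply Rmult_le_reg_l with (e * e); [nra|]. nra. }
        pose proof (Cmod_triangle (G (RtoC e)) (G 0%C - G (RtoC e))%C).
        replace (G (RtoC e) + (G 0%C - G (RtoC e)))%C with (G 0%C) in H by ring.
        rewrite Cmod_minus_sym in H. lra. }
      rewrite Cmod_mult, Cmod_inv, Cmod_mult, Cmod_mult, !Cmod_R, !Rabs_pos_eq by (try lra; apply Cmult_neq_0; auto).
      apply Rmult_le_reg_r with (2 * lam); [lra|]. rewrite Rmult_assoc, Rinv_l by (apply Rgt_not_eq; lra).
      pose proof (Cmod_ge_0 (G 0%C)). lra.
    + assert (Hm : 0 < Cmod z) by (apply Cmod_gt_0; auto).
      rewrite Cmod_mult, Cmod_inv by (apply Cmult_neq_0; auto; apply Cmult_neq_0; auto).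
      rewrite !Cmod_mult, Cmod_R, Rabs_pos_eq by lra.
      pose proof (Hg z Hz). assert (Hp : 0 < lam * (Cmod z * Cmod z)) by (apply Rmult_lt_0_compat; nra).
      apply Rmult_le_reg_r with (lam * (Cmod z * Cmod z)); [exact Hp|].
      rewrite Rmult_assoc, Rinv_l by (apply Rgt_not_eq; exact Hp). lra.
  - intros z Hz. unfold phi. destruct (Ceq_dec z 0) as [->|Hz0].
    + rewrite Hf0. simpl. ring.
    + unfold gfun. field. auto.
Qed.

Lemma part2 (lam : R) (Hlam : 0 < lam) (mu : R) : 3 * lam < mu ->
     exists f f1 f2 : C -> C,
       derivative_on_D f f1 /\ derivative_on_D f1 f2 /\
       f 0%C = 0%C /\ f1 0%C = 1%C /\
       (forall z, inD z -> Cmod (z ^ 2 * f2 z + z * f1 z - f z)%C <= mu) /\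
       ~ Omega lam f.
Proof.
  intros Hmu. set (a := mu / 3). assert (Ha : lam < a) by (unfold a; lra).
  set (f := fun y => (y + RtoC a * (y * y))%C).
  set (f1 := fun y => (1 + RtoC (2 * a) * y)%C).
  set (f2 := fun y : C => RtoC (2 * a)).
  assert (D1 : forall y, Dc f y (f1 y)).
  { intros y. unfold f, f1. apply (Dc_ext_val _ _ (1 + RtoC a * (1 * y + y * 1))%C).
    { rewrite RtoC_mult. ring. }
    apply (Dc_plus (fun y => y) (fun y => RtoC a * (y * y))%C). apply Dc_id.
    apply Dc_scal. apply (Dc_mult (fun y => y) (fun y => y)); apply Dc_id. }
  assert (D2 : forall y, Dc f1 y (f2 y)).
  { intros y. unfold f1, f2. apply (Dc_ext_val _ _ (0 + RtoC (2 * a) * 1)%C). ring.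
    apply (Dc_plus (fun _ => 1%C) (fun y => RtoC (2 * a) * y)%C). apply Dc_const.
    apply Dc_scal. apply Dc_id. }
  exists f, f1, f2. split; [|split; [|split; [|split; [|split]]]].
  - intros z _. apply Dc_iff. apply D1.
  - intros z _. apply Dc_iff. apply D2.
  - unfold f. ring.
  - unfold f1. ring.
  - intros z Hz. unfold inD in Hz. unfold f, f1, f2.
    replace (z ^ 2 * RtoC (2 * a) + z * (1 + RtoC (2 * a) * z) - (z + RtoC a * (z * z)))%C
      with (RtoC (3 * a) * (z * z))%C by (rewrite !RtoC_mult; ring).
    rewrite !Cmod_mult, Cmod_R, Rabs_pos_eq by (unfold a; lra).
    pose proof (Cmod_ge_0 z). unfold a. 
    assert (Cmod z * Cmod z <= 1) by nra. nra.
  - intros [f1' [Hd [_ [_ [phi [_ [Hb Heq]]]]]]].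
    set (h := RtoC (1/2)).
    assert (Hh : inD h) by (unfold inD, h; rewrite Cmod_R, Rabs_pos_eq; lra).
    assert (E1 : f1' h = f1 h).
    { apply (Dc_unique f h). apply Dc_iff. apply Hd; auto. apply D1. }
    specialize (Heq h Hh). specialize (Hb h Hh). rewrite E1 in Heq.
    assert (Hl0 : RtoC lam <> 0%C) by (intro E; apply (f_equal fst) in E; simpl in E; lra).
    assert (Hh0 : h <> 0%C) by (unfold h; intro E; apply (f_equal fst) in E; simpl in E; lra).
    assert (E2 : (RtoC a * (h*h))%C = (RtoC lam * (h*h) * phi h)%C).
    { transitivity (h * f1 h - f h)%C. unfold f, f1. rewrite RtoC_mult. ring.
      rewrite Heq. ring. }
    assert (Ep : phi h = RtoC (a / lam)).
    { rewrite RtoC_div by lra.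
      transitivity ((RtoC lam * (h*h) * phi h) / (RtoC lam * (h*h)))%C.
      field. split; auto. rewrite <- E2. field. split; auto. }
    rewrite Ep, Cmod_R, Rabs_pos_eq in Hb by (apply Rlt_le, Rdiv_lt_0_compat; lra).
    apply Rmult_le_compat_r with (r := lam) in Hb; [|lra].
    unfold Rdiv in Hb. rewrite Rmult_assoc, Rinv_l in Hb by (apply Rgt_not_eq; lra). lra.
Qed.


(* f analytic in D with derivative f1 and second derivative f2 (derivatives
   on an open set are unique, so quantifying over f1 f2 is faithful). *)
Theorem theorem4p4 (lam : R) (Hlam : 0 < lam) :
  (forall f f1 f2 : C -> C,
     derivative_on_D f f1 -> derivative_on_D f1 f2 ->
     f 0%C = 0%C -> f1 0%C = 1%C ->
     (forall z, inD z -> Cmod (z ^ 2 * f2 z + z * f1 z - f z)%C <= 3 * lam) ->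
     Omega lam f)
  /\
  (* 3 lambda is best possible: it cannot be replaced by any larger constant *)
  (forall mu : R, 3 * lam < mu ->
     exists f f1 f2 : C -> C,
       derivative_on_D f f1 /\ derivative_on_D f1 f2 /\
       f 0%C = 0%C /\ f1 0%C = 1%C /\
       (forall z, inD z -> Cmod (z ^ 2 * f2 z + z * f1 z - f z)%C <= mu) /\
       ~ Omega lam f).
Proof.
  split.
  - intros f f1 f2 H1 H2 H3 H4 H5. apply (part1 lam Hlam f f1 f2); auto.
  - intros mu Hmu. apply part2; auto.
Qed.
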